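(* Let $\mathbb{K}\in\{\mathbb{R},\mathbb{C}\}$, $d,m,n\ge1$ with $(m,n)\ne(1,1)$ and $d(\mathbb{K})mn\ge4$. Then $\mathrm{Q}^{d,m}_n(\mathbb{K})$ is simply connected.
   Context: $d(\mathbb{K})=\dim_\mathbb{R}\mathbb{K}$. $\mathrm{Q}^{d,m}_n(\mathbb{K})$ is the space of $m$-tuples $(f_1,\dots,f_m)$ of monic degree-$d$ polynomials with coefficients in $\mathbb{K}$ having no common real root of multiplicity $\ge n$ (common non-real roots of any multiplicity allowed), topologized as a subspace of $\mathbb{K}^{dm}$ via coefficients. *)

(* Defs.v *)
From Stdlib Require Import Reals List Arith.
Open Scope R_scope.

Definition C : Type := (R * R)%type.
Definition Cadd (a b : C) : C := (fst a + fst b, snd a + snd b).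
Definition Csub (a b : C) : C := (fst a - fst b, snd a - snd b).
Definition Cmul (a b : C) : C :=
  (fst a * fst b - snd a * snd b, fst a * snd b + snd a * fst b).
Definition C0 : C := (0, 0).
Definition C1 : C := (1, 0).
Definition RtoC (t : R) : C := (t, 0).
Fixpoint Cpow (z : C) (k : nat) : C :=
  match k with O => C1 | S k' => Cmul z (Cpow z k') end.

(** Evaluation of the polynomial with coefficient list b = [b_0; b_1; ...]. *)
Fixpoint peval (b : list C) (z : C) : C :=
  match b with nil => C0 | c :: b' => Cadd c (Cmul z (peval b' z)) end.

Inductive Kfield := KR | KC.
Definition dK (K : Kfield) : nat := match K with KR => 1%nat | KC => 2%nat end.
Definition inK (K : Kfield) (c : C) : Prop :=
  match K with KR => snd c = 0 | KC => True end.

(** * Coordinates: a point of K^{dm} ~ R^{d(K) d m} is x : nat -> R (only the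
    first d(K)*d*m coordinates matter).  Coefficient i (i < d) of polynomial j
    (j < m) is stored at index j*d+i (real case) or at 2(j*d+i), 2(j*d+i)+1
    (real and imaginary parts, complex case). *)
Definition coef (K : Kfield) (d : nat) (x : nat -> R) (j i : nat) : C :=
  match K with
  | KR => (x (j * d + i)%nat, 0)
  | KC => (x (2 * (j * d + i))%nat, x (2 * (j * d + i) + 1)%nat)
  end.

Definition fpoly (K : Kfield) (d : nat) (x : nat -> R) (j : nat) (z : C) : C :=
  Cadd (Cpow z d) (peval (map (coef K d x j) (seq 0 d)) z).

Definition root_mult_ge (K : Kfield) (f : C -> C) (t : C) (n : nat) : Prop :=
  exists b : list C, Forall (inK K) b /\
    forall z : C, f z = Cmul (Cpow (Csub z t) n) (peval b z).

Definition Qspace (K : Kfield) (d m n : nat) (x : nat -> R) : Prop :=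
  ~ (exists t : R, forall j, (j < m)%nat -> root_mult_ge K (fpoly K d x j) (RtoC t) n).

Definition eqN (N : nat) (x y : nat -> R) : Prop := forall i, (i < N)%nat -> x i = y i.

Definition in01 (s : R) : Prop := 0 <= s <= 1.

Definition cont_path (N : nat) (g : R -> nat -> R) : Prop :=
  forall s0, in01 s0 -> forall eps, eps > 0 -> exists delta, delta > 0 /\
    forall s, in01 s -> Rabs (s - s0) < delta ->
      forall i, (i < N)%nat -> Rabs (g s i - g s0 i) < eps.

Definition cont_square (N : nat) (H : R -> R -> nat -> R) : Prop :=
  forall s0 u0, in01 s0 -> in01 u0 -> forall eps, eps > 0 -> exists delta, delta > 0 /\
    forall s u, in01 s -> in01 u -> Rabs (s - s0) < delta -> Rabs (u - u0) < delta ->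
      forall i, (i < N)%nat -> Rabs (H s u i - H s0 u0 i) < eps.

Definition path_in (N : nat) (S : (nat -> R) -> Prop) (g : R -> nat -> R) : Prop :=
  cont_path N g /\ forall s, in01 s -> S (g s).

Definition simply_connected (N : nat) (S : (nat -> R) -> Prop) : Prop :=
  (exists x, S x) /\
  (forall x y, S x -> S y -> exists g, path_in N S g /\ eqN N (g 0) x /\ eqN N (g 1) y) /\
  (forall g, path_in N S g -> eqN N (g 0) (g 1) ->
     exists H : R -> R -> nat -> R,
       cont_square N H /\
       (forall s u, in01 s -> in01 u -> S (H s u)) /\
       (forall s, in01 s -> eqN N (H s 0) (g s) /\ eqN N (H s 1) (g 0)) /\
       (forall u, in01 u -> eqN N (H 0 u) (g 0) /\ eqN N (H 1 u) (g 0))).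

(* Main.v *)
From Stdlib Require Import Reals List Arith Lia Lra Bool ClassicalEpsilon Classical FunctionalExtensionality ZArith.
Require Import Defs.
Open Scope R_scope.

Lemma Cext (a b : C) : fst a = fst b -> snd a = snd b -> a = b.
Proof. destruct a, b; simpl; intros; subst; auto. Qed.

Ltac cring := apply Cext; unfold Cadd, Cmul, Csub, C0, C1, RtoC; simpl; ring.

Definition Copp (a : C) : C := (- fst a, - snd a).
Definition cn (z : C) : R := Rabs (fst z) + Rabs (snd z).

Lemma cn_nonneg z : 0 <= cn z.
Proof. unfold cn; pose proof (Rabs_pos (fst z)); pose proof (Rabs_pos (snd z)); lra. Qed.

Lemma cn_add a b : cn (Cadd a b) <= cn a + cn b.
Proof. unfold cn, Cadd; simpl.
  pose proof (Rabs_triang (fst a) (fst b)); pose proof (Rabs_triang (snd a) (snd b)); lra. Qed.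

Lemma cn_sub a b : cn (Csub a b) <= cn a + cn b.
Proof. unfold cn, Csub; simpl.
  pose proof (Rabs_triang (fst a) (- fst b)); pose proof (Rabs_triang (snd a) (- snd b)).
  rewrite !Rabs_Ropp in *. unfold Rminus. lra. Qed.

Lemma cn_mul a b : cn (Cmul a b) <= cn a * cn b.
Proof. unfold cn, Cmul; simpl. destruct a as [a1 a2], b as [b1 b2]; simpl.
  pose proof (Rabs_triang (a1*b1) (- (a2*b2))).
  pose proof (Rabs_triang (a1*b2) (a2*b1)).
  rewrite Rabs_Ropp in *. rewrite !Rabs_mult in *. unfold Rminus.
  pose proof (Rabs_pos a1); pose proof (Rabs_pos a2); pose proof (Rabs_pos b1); pose proof (Rabs_pos b2).
  nra. Qed.

Lemma cn_RtoC_mul h z : cn (Cmul (RtoC h) z) = Rabs h * cn z.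
Proof. unfold cn, Cmul, RtoC; simpl.
  replace (h * fst z - 0 * snd z) with (h * fst z) by ring.
  replace (h * snd z + 0 * fst z) with (h * snd z) by ring.
  rewrite !Rabs_mult. ring. Qed.

Lemma cn_RtoC h : cn (RtoC h) = Rabs h.
Proof. unfold cn, RtoC; simpl. rewrite Rabs_R0. ring. Qed.

Lemma Rabs_eq_0 x : Rabs x = 0 -> x = 0.
Proof. intros H; destruct (Req_dec x 0); auto. exfalso; apply (Rabs_no_R0 x); auto. Qed.

Lemma cn_zero z : cn z = 0 -> z = C0.
Proof. unfold cn; intros H. pose proof (Rabs_pos (fst z)); pose proof (Rabs_pos (snd z)).
  assert (Rabs (fst z) = 0) by lra. assert (Rabs (snd z) = 0) by lra.
  apply Cext; simpl; apply Rabs_eq_0; auto. Qed.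

Lemma cn_C0 : cn C0 = 0.
Proof. unfold cn, C0; simpl; rewrite Rabs_R0; ring. Qed.

Lemma cn_pow_RtoC h k : cn (Cpow (RtoC h) k) = Rabs h ^ k.
Proof. induction k; simpl.
  - unfold cn, C1; simpl. rewrite Rabs_R0, Rabs_R1; ring.
  - rewrite cn_RtoC_mul, IHk; ring. Qed.

Fixpoint sdiv (t : C) (p : list C) : list C * C :=
  match p with
  | nil => (nil, C0)
  | c :: p' => match p' with
               | nil => (nil, c)
               | _ => let qr := sdiv t p' in (snd qr :: fst qr, Cadd c (Cmul t (snd qr)))
               end
  end.

Lemma sdiv_spec t p z :
  peval p z = Cadd (Cmul (Csub z t) (peval (fst (sdiv t p)) z)) (snd (sdiv t p)).
Proof.
  induction p as [|c p IH]; simpl.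
  - cring.
  - destruct p as [|c' p'].
    + simpl. cring.
    + remember (c' :: p') as pp. simpl. rewrite IH.
      destruct (peval (fst (sdiv t pp)) z) as [q1 q2].
      destruct (snd (sdiv t pp)) as [r1 r2]. destruct z, t, c. cring.
Qed.

Lemma sdiv_len t p : length (fst (sdiv t p)) = pred (length p).
Proof.
  induction p as [|c p IH]; simpl; auto.
  destruct p as [|c' p']; simpl; auto.
Qed.

Lemma sdiv_rem t p : snd (sdiv t p) = peval p t.
Proof. rewrite (sdiv_spec t p t). destruct (peval (fst (sdiv t p)) t). cring. Qed.

Fixpoint taylor (t : C) (k : nat) (p : list C) : list C :=
  match k with 0 => nil | S k' => snd (sdiv t p) :: taylor t k' (fst (sdiv t p)) end.
Fixpoint tq (t : C) (k : nat) (p : list C) : list C :=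
  match k with 0 => p | S k' => tq t k' (fst (sdiv t p)) end.

Lemma taylor_len t k p : length (taylor t k p) = k.
Proof. revert p; induction k; simpl; auto. Qed.

Lemma tq_len t k p : (length (tq t k p) = length p - k)%nat.
Proof. revert p; induction k; intros p; simpl. lia. rewrite IHk, sdiv_len. lia. Qed.

Lemma taylor_spec t k p z :
  peval p z = Cadd (peval (taylor t k p) (Csub z t))
                   (Cmul (Cpow (Csub z t) k) (peval (tq t k p) z)).
Proof.
  revert p; induction k; intros p; simpl.
  - destruct (peval p z); cring.
  - rewrite (sdiv_spec t p z) at 1. rewrite (IHk (fst (sdiv t p))).
    destruct (peval (taylor t k (fst (sdiv t p))) (Csub z t)).
    destruct (peval (tq t k (fst (sdiv t p))) z).
    destruct (Cpow (Csub z t) k). destruct (snd (sdiv t p)). destruct z, t. cring.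
Qed.

Definition allz (l : list C) : Prop := Forall (fun c => c = C0) l.

Lemma peval_allz l z : allz l -> peval l z = C0.
Proof. induction 1; simpl; auto. rewrite IHForall, H. cring. Qed.

Lemma peval_bound p z0 : exists B, 0 <= B /\ forall h, Rabs h <= 1 ->
  cn (peval p (Cadd z0 (RtoC h))) <= B.
Proof.
  induction p as [|c p IH]; simpl.
  - exists 0; split; [lra|]. intros; rewrite cn_C0; lra.
  - destruct IH as [B [HB IH]]. exists (cn c + (cn z0 + 1) * B). split.
    + pose proof (cn_nonneg c); pose proof (cn_nonneg z0); nra.
    + intros h Hh. eapply Rle_trans; [apply cn_add|].
      eapply Rle_trans; [apply Rplus_le_compat_l; apply cn_mul|].
      pose proof (cn_add z0 (RtoC h)). rewrite cn_RtoC in H.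
      specialize (IH h Hh). pose proof (cn_nonneg (peval p (Cadd z0 (RtoC h)))).
      pose proof (cn_nonneg (Cadd z0 (RtoC h))).
      apply Rplus_le_compat_l. apply Rmult_le_compat; try lra.
Qed.

Lemma vanish r C :
  (forall h, 0 < Rabs h <= 1 -> cn (peval r (RtoC h)) <= C * Rabs h ^ length r) ->
  allz r.
Proof.
  revert C; induction r as [|c r IH]; intros C H; [constructor|].
  assert (Hc0 : c = C0).
  { destruct (peval_bound r C0) as [B [HB Hb]].
    assert (Hc : forall h, 0 < Rabs h <= 1 -> cn c <= Rabs h * (Rabs C + B)).
    { intros h Hh. specialize (H h Hh). simpl in H.
      specialize (Hb h (proj2 Hh)).
      replace (Cadd C0 (RtoC h)) with (RtoC h) in Hb by cring.
      assert (E: c = Csub (Cadd c (Cmul (RtoC h) (peval r (RtoC h)))) (Cmul (RtoC h) (peval r (RtoC h)))) by cring.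
      rewrite E. eapply Rle_trans; [apply cn_sub|]. rewrite cn_RtoC_mul.
      assert (Rabs h ^ length r <= 1).
      { rewrite <- (pow1 (length r)). apply pow_incr. split; [apply Rabs_pos|lra]. }
      assert (C * (Rabs h * Rabs h ^ length r) <= Rabs C * Rabs h).
      { pose proof (pow_le (Rabs h) (length r) (Rabs_pos h)).
        assert (C * (Rabs h * Rabs h ^ length r) <= Rabs (C * (Rabs h * Rabs h ^ length r))) by apply Rle_abs.
        rewrite !Rabs_mult, Rabs_Rabsolu, (Rabs_pos_eq (Rabs h ^ length r)) in H2 by auto.
        assert (Rabs C * (Rabs h * Rabs h ^ length r) <= Rabs C * Rabs h * 1).
        { rewrite <- Rmult_assoc. apply Rmult_le_compat_l; auto. apply Rmult_le_pos; apply Rabs_pos. }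
        lra. }
      pose proof (Rabs_pos h). nra. }
    destruct (Req_dec (cn c) 0) as [E|E]; [apply cn_zero; auto|].
    pose proof (cn_nonneg c).
    set (K := Rabs C + B + 1).
    assert (K > 0) by (unfold K; pose proof (Rabs_pos C); lra).
    set (h := Rmin (1/2) (cn c / (2 * K))).
    assert (h > 0). { unfold h. apply Rmin_glb_lt; [lra|]. apply Rdiv_lt_0_compat; lra. }
    assert (h <= cn c / (2*K)) by apply Rmin_r.
    assert (h <= 1/2) by apply Rmin_l.
    assert (Habs : Rabs h = h) by (apply Rabs_pos_eq; lra).
    specialize (Hc h). rewrite Habs in Hc. specialize (Hc ltac:(lra)).
    assert (h * (2*K) <= cn c).
    { assert (Hh2 : h <= cn c / (2*K)) by apply Rmin_r.
      apply (Rmult_le_compat_r (2*K)) in Hh2; [|lra].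
      replace (cn c / (2 * K) * (2 * K)) with (cn c) in Hh2 by (field; lra). lra. }
    exfalso. pose proof (Rabs_pos C). unfold K in *. nra. }
  constructor; auto.
  apply (IH C). intros h Hh. specialize (H h Hh). simpl in H. subst c.
  replace (Cadd C0 (Cmul (RtoC h) (peval r (RtoC h)))) with (Cmul (RtoC h) (peval r (RtoC h))) in H by cring.
  rewrite cn_RtoC_mul in H.
  apply (Rmult_le_reg_l (Rabs h)); [lra|]. lra.
Qed.

Definition L (K : Kfield) (d : nat) (y : nat -> R) (j : nat) : list C :=
  map (coef K d y j) (seq 0 d) ++ (C1 :: nil).

Definition Z (K : Kfield) (d m n : nat) (y : nat -> R) (t : R) : Prop :=
  forall j, (j < m)%nat -> allz (taylor (RtoC t) n (L K d y j)).

Lemma peval_app1 l z : peval (l ++ C1 :: nil) z = Cadd (peval l z) (Cpow z (length l)).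
Proof.
  induction l as [|c l IH]; simpl.
  - cring.
  - rewrite IH. destruct (peval l z), (Cpow z (length l)), z, c. cring.
Qed.

Lemma fpoly_L K d y j z : fpoly K d y j z = peval (L K d y j) z.
Proof.
  unfold fpoly, L. rewrite peval_app1, length_map, length_seq.
  destruct (Cpow z d), (peval (map (coef K d y j) (seq 0 d)) z). cring.
Qed.

Lemma inK_sdiv K t p : inK K t -> Forall (inK K) p ->
  Forall (inK K) (fst (sdiv t p)) /\ inK K (snd (sdiv t p)).
Proof.
  intros Ht Hp. induction Hp as [|c p Hc Hp IH]; simpl.
  - split; [constructor|]. destruct K; simpl; auto.
  - destruct p as [|c' p'].
    + simpl. split; auto.
    + remember (c' :: p') as pp. simpl. destruct IH as [IH1 IH2]. split.
      * constructor; auto.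
      * destruct K; simpl in *; auto. unfold Cadd, Cmul; simpl. rewrite Hc, Ht, IH2. ring.
Qed.

Lemma inK_tq K t k p : inK K t -> Forall (inK K) p -> Forall (inK K) (tq t k p).
Proof.
  revert p; induction k; intros p Ht Hp; simpl; auto.
  apply IHk; auto. apply inK_sdiv; auto.
Qed.

Lemma inK_L K d y j : Forall (inK K) (L K d y j).
Proof.
  unfold L. apply Forall_app; split.
  - apply Forall_forall. intros c Hc. apply in_map_iff in Hc. destruct Hc as [i [<- _]].
    destruct K; simpl; auto.
  - constructor; [|constructor]. destruct K; simpl; auto.
Qed.

Lemma Z_root K d m n y t : Z K d m n y t ->
  forall j, (j < m)%nat -> root_mult_ge K (fpoly K d y j) (RtoC t) n.
Proof.
  intros HZ j Hj. exists (tq (RtoC t) n (L K d y j)). split.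
  - apply inK_tq; [destruct K; simpl; auto|apply inK_L].
  - intros z. rewrite fpoly_L, (taylor_spec (RtoC t) n).
    rewrite peval_allz by (apply HZ; auto).
    destruct (Cmul (Cpow (Csub z (RtoC t)) n) (peval (tq (RtoC t) n (L K d y j)) z)). cring.
Qed.

Lemma root_Z K d n y t j : root_mult_ge K (fpoly K d y j) (RtoC t) n ->
  allz (taylor (RtoC t) n (L K d y j)).
Proof.
  intros [b [_ Hb]].
  set (p := L K d y j). set (tt := RtoC t).
  destruct (peval_bound b tt) as [B1 [HB1 Hb1]].
  destruct (peval_bound (tq tt n p) tt) as [B2 [HB2 Hb2]].
  apply (vanish _ (B1 + B2)). rewrite taylor_len.
  intros h Hh. set (z := Cadd tt (RtoC h)).
  assert (Ez : Csub z tt = RtoC h) by (unfold z, tt; cring).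
  pose proof (taylor_spec tt n p z) as Hs. rewrite Ez in Hs.
  specialize (Hb z). rewrite fpoly_L in Hb. fold p in Hb. fold tt in Hb. rewrite Ez in Hb.
  assert (E : peval (taylor tt n p) (RtoC h) =
     Cmul (Cpow (RtoC h) n) (Csub (peval b z) (peval (tq tt n p) z))).
  { rewrite Hb in Hs. destruct (peval (taylor tt n p) (RtoC h)), (Cpow (RtoC h) n),
      (peval b z), (peval (tq tt n p) z). unfold Cadd, Cmul, Csub in *. simpl in *.
      injection Hs; intros. apply Cext; simpl; lra. }
  rewrite E. eapply Rle_trans; [apply cn_mul|]. rewrite cn_pow_RtoC.
  pose proof (cn_sub (peval b z) (peval (tq tt n p) z)).
  specialize (Hb1 h (proj2 Hh)). specialize (Hb2 h (proj2 Hh)). fold z in Hb1, Hb2.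
  pose proof (pow_le (Rabs h) n (Rabs_pos h)).
  rewrite (Rmult_comm (B1 + B2)). apply Rmult_le_compat_l; auto. lra.
Qed.

Lemma Q_iff K d m n y : Qspace K d m n y <-> forall t, ~ Z K d m n y t.
Proof.
  unfold Qspace. split.
  - intros HQ t HZ. apply HQ. exists t. apply Z_root; auto.
  - intros H [t Ht]. apply (H t). intros j Hj. apply (root_Z K d n y t j). apply Ht; auto.
Qed.

Fixpoint rpeval (l : list R) (t : R) : R :=
  match l with nil => 0 | c :: l' => c + t * rpeval l' t end.

Lemma fst_peval l t : fst (peval l (RtoC t)) = rpeval (map fst l) t.
Proof. induction l; simpl; auto. rewrite <- IHl. unfold RtoC; simpl. ring. Qed.

Lemma monic_bound l Rb t : (forall c, In c l -> Rabs c <= Rb) -> Rb + 1 <= Rabs t ->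
  1 <= Rabs (rpeval (l ++ 1 :: nil) t).
Proof.
  induction l as [|c l IH]; intros Hl Ht; simpl.
  - rewrite Rmult_0_r, Rplus_0_r, Rabs_R1. lra.
  - assert (H1 : 1 <= Rabs (rpeval (l ++ 1 :: nil) t)) by (apply IH; auto; intros; apply Hl; simpl; auto).
    assert (Hc : Rabs c <= Rb) by (apply Hl; simpl; auto).
    pose proof (Rabs_triang_inv (t * rpeval (l ++ 1 :: nil) t) (-c)).
    replace (t * rpeval (l ++ 1 :: nil) t - - c) with (c + t * rpeval (l ++ 1 :: nil) t) in H by ring.
    rewrite Rabs_Ropp, Rabs_mult in H.
    pose proof (Rabs_pos t). nra.
Qed.

Lemma taylor_head t n p : (1 <= n)%nat -> exists rest, taylor t n p = peval p t :: rest.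
Proof. intros Hn. destruct n; [lia|]. simpl. rewrite sdiv_rem. eauto. Qed.

Lemma rootbound K d m n y t Rb : (1 <= m)%nat -> (1 <= n)%nat ->
  (forall i, (i < dK K * d * m)%nat -> Rabs (y i) <= Rb) -> Rb + 1 <= Rabs t -> ~ Z K d m n y t.
Proof.
  intros Hm Hn Hy Ht HZ. specialize (HZ 0%nat Hm).
  destruct (taylor_head (RtoC t) n (L K d y 0) Hn) as [rest Hr]. rewrite Hr in HZ.
  inversion HZ as [|? ? H0 _]; subst.
  assert (H1 : fst (peval (L K d y 0) (RtoC t)) = 0) by (rewrite H0; reflexivity).
  rewrite fst_peval in H1. unfold L in H1. rewrite map_app in H1. simpl in H1.
  assert (1 <= Rabs (rpeval (map fst (map (coef K d y 0) (seq 0 d)) ++ 1 :: nil) t)).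
  { apply (monic_bound _ Rb); auto. intros c Hc. rewrite map_map in Hc. apply in_map_iff in Hc.
    destruct Hc as [i [<- Hi]]. apply in_seq in Hi.
    destruct K; simpl; apply Hy; simpl in *; nia. }
  simpl in H. rewrite map_map in H. rewrite map_map in H1. rewrite H1, Rabs_R0 in H. lra.
Qed.

(** * the case n > d *)
Lemma sdiv_cons2 t c x xs : sdiv t (c :: x :: xs) =
  (snd (sdiv t (x :: xs)) :: fst (sdiv t (x :: xs)), Cadd c (Cmul t (snd (sdiv t (x :: xs))))).
Proof. reflexivity. Qed.

Lemma sdiv_last t p a : p <> nil ->
  exists q, fst (sdiv t (p ++ a :: nil)) = q ++ a :: nil /\ length q = pred (length p).
Proof.
  induction p as [|c p IH]; intros Hp; [congruence|].
  destruct p as [|c' p'].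
  - simpl. exists nil. auto.
  - destruct (IH ltac:(congruence)) as [q [Hq Hl]].
    change ((c :: c' :: p') ++ a :: nil) with (c :: c' :: (p' ++ a :: nil)).
    change ((c' :: p') ++ a :: nil) with (c' :: (p' ++ a :: nil)) in Hq.
    rewrite sdiv_cons2. cbn [fst]. rewrite Hq.
    exists (snd (sdiv t (c' :: p' ++ a :: nil)) :: q). simpl. split; auto.
Qed.

Lemma taylor_last t k : forall p a nn, length p = k -> (k < nn)%nat ->
  nth k (taylor t nn (p ++ a :: nil)) C0 = a.
Proof.
  induction k; intros p a nn Hl Hk.
  - destruct p; [|simpl in Hl; lia]. destruct nn; [lia|]. simpl. reflexivity.
  - destruct nn; [lia|]. simpl.
    destruct (sdiv_last t p a) as [q [Hq Hlq]]. { intros ->; simpl in Hl; lia. }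
    rewrite Hq. apply IHk; lia.
Qed.

Lemma big_n_noZ K d m n y t : (1 <= m)%nat -> (d < n)%nat -> ~ Z K d m n y t.
Proof.
  intros Hm Hdn HZ. specialize (HZ 0%nat Hm). unfold L in HZ.
  assert (E : nth d (taylor (RtoC t) n (map (coef K d y 0) (seq 0 d) ++ C1 :: nil)) C0 = C1).
  { apply taylor_last; auto. rewrite length_map, length_seq; auto. }
  assert (In C1 (taylor (RtoC t) n (map (coef K d y 0) (seq 0 d) ++ C1 :: nil))).
  { rewrite <- E at 1. apply nth_In. rewrite taylor_len. auto. }
  unfold allz in HZ; rewrite Forall_forall in HZ. specialize (HZ _ H). unfold C1, C0 in HZ. injection HZ. lra.
Qed.

Fixpoint ladd (a b : list C) : list C :=
  match a, b with x :: a', y :: b' => Cadd x y :: ladd a' b' | _, _ => nil end.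
Fixpoint lsub (a b : list C) : list C :=
  match a, b with x :: a', y :: b' => Csub x y :: lsub a' b' | _, _ => nil end.

Lemma peval_lsub a b z : length a = length b -> peval (lsub a b) z = Csub (peval a z) (peval b z).
Proof.
  revert b; induction a as [|x a IH]; intros [|y b] Hl; simpl in *; try lia.
  - cring.
  - rewrite IH by lia. destruct (peval a z), (peval b z), x, y, z. cring.
Qed.

Lemma peval_inj a b : length a = length b ->
  (forall x : R, peval a (RtoC x) = peval b (RtoC x)) -> a = b.
Proof.
  intros Hl H.
  assert (Hz : allz (lsub a b)).
  { apply (vanish _ 0). intros h _. rewrite peval_lsub by auto. rewrite H.
    replace (Csub (peval b (RtoC h)) (peval b (RtoC h))) with C0 by (destruct (peval b (RtoC h)); cring).
    rewrite cn_C0, Rmult_0_l. lra. }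
  clear H. revert b Hl Hz; induction a as [|x a IH]; intros [|y b] Hl Hz; simpl in *; try lia; auto.
  inversion Hz as [|? ? Hxy Hr]; subst. f_equal.
  - destruct x, y; unfold Csub, C0 in Hxy; simpl in Hxy. injection Hxy; intros. f_equal; lra.
  - apply IH; auto.
Qed.

Lemma tq_full t k p : (length p <= k)%nat -> tq t k p = nil.
Proof. intros H. pose proof (tq_len t k p). destruct (tq t k p); simpl in *; auto. lia. Qed.

Lemma taylor_full t k p z : (length p <= k)%nat ->
  peval p z = peval (taylor t k p) (Csub z t).
Proof.
  intros H. rewrite (taylor_spec t k p z), tq_full by auto. simpl.
  destruct (peval (taylor t k p) (Csub z t)), (Cpow (Csub z t) k). cring.
Qed.

Lemma roundtrip t n h : length h = n -> taylor (Copp t) n (taylor t n h) = h.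
Proof.
  intros Hl. symmetry. apply peval_inj.
  - rewrite !taylor_len; auto.
  - intros x. rewrite (taylor_full t n h) by lia.
    rewrite (taylor_full (Copp t) n (taylor t n h)) by (rewrite taylor_len; lia).
    f_equal. destruct t; cring.
Qed.

Lemma sdiv_add t p q : length p = length q ->
  sdiv t (ladd p q) = (ladd (fst (sdiv t p)) (fst (sdiv t q)), Cadd (snd (sdiv t p)) (snd (sdiv t q))).
Proof.
  revert q; induction p as [|x p IH]; intros [|y q] Hl; simpl in Hl; try lia.
  - simpl. f_equal. cring.
  - destruct p as [|x' p']; destruct q as [|y' q']; simpl in Hl; try lia.
    + simpl. reflexivity.
    + change (ladd (x :: x' :: p') (y :: y' :: q')) with (Cadd x y :: ladd (x' :: p') (y' :: q')).
      assert (E : ladd (x' :: p') (y' :: q') = Cadd x' y' :: ladd p' q') by reflexivity.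
      rewrite E, sdiv_cons2, <- E, IH by (simpl; lia). rewrite !sdiv_cons2. simpl. f_equal.
      destruct (snd (sdiv t (x' :: p'))), (snd (sdiv t (y' :: q'))), x, y, t. cring.
Qed.

Lemma taylor_add t k p q : length p = length q ->
  taylor t k (ladd p q) = ladd (taylor t k p) (taylor t k q).
Proof.
  revert p q; induction k; intros p q Hl; simpl; auto.
  rewrite sdiv_add by auto. simpl. f_equal. apply IHk. rewrite !sdiv_len; auto.
Qed.

Fixpoint zeros (k : nat) : list C := match k with 0 => nil | S k' => C0 :: zeros k' end.

Lemma sdiv_zeros t k : sdiv t (zeros (S k)) = (zeros k, C0).
Proof.
  induction k; simpl; auto.
  change (sdiv t (C0 :: C0 :: zeros k)) with
    (snd (sdiv t (C0 :: zeros k)) :: fst (sdiv t (C0 :: zeros k)), Cadd C0 (Cmul t (snd (sdiv t (C0 :: zeros k))))).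
  simpl in IHk. rewrite IHk. simpl. f_equal. destruct t; cring.
Qed.

Lemma sdiv_app0 t p k : p <> nil ->
  sdiv t (p ++ zeros k) = (fst (sdiv t p) ++ zeros k, snd (sdiv t p)).
Proof.
  induction p as [|c p IH]; intros Hp; [congruence|].
  destruct p as [|x xs].
  - simpl. destruct k; simpl; auto.
    pose proof (sdiv_zeros t k) as Hz. simpl in Hz.
    change (sdiv t (c :: C0 :: zeros k)) with
      (snd (sdiv t (C0 :: zeros k)) :: fst (sdiv t (C0 :: zeros k)), Cadd c (Cmul t (snd (sdiv t (C0 :: zeros k))))).
    rewrite Hz. simpl. f_equal. destruct t, c; cring.
  - change ((c :: x :: xs) ++ zeros k) with (c :: x :: (xs ++ zeros k)).
    rewrite sdiv_cons2. change (x :: xs ++ zeros k) with ((x :: xs) ++ zeros k).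
    rewrite IH by congruence. rewrite sdiv_cons2. simpl. reflexivity.
Qed.

Lemma taylor_app0 t k p j : (k <= length p)%nat -> taylor t k (p ++ zeros j) = taylor t k p.
Proof.
  revert p; induction k; intros p Hk; simpl; auto.
  rewrite sdiv_app0 by (intros ->; simpl in Hk; lia). simpl. f_equal.
  apply IHk. rewrite sdiv_len. lia.
Qed.

Lemma ladd_allz a b : length a = length b -> allz (ladd a b) -> b = map Copp a.
Proof.
  revert b; induction a as [|x a IH]; intros [|y b] Hl Hz; simpl in *; try lia; auto.
  inversion Hz; subst. f_equal.
  - destruct x, y; unfold Cadd, C0, Copp in *; simpl in *. injection H1; intros. f_equal; lra.
  - apply IH; auto.
Qed.

(** * perturbation in four real coordinates *)
Definition qe K e := (e / dK K)%nat.
Definition je K n e := (qe K e / n)%nat.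
Definition ke K n e := (qe K e mod n)%nat.
Definition pe K e := (e mod dK K)%nat.
Definition idx K d n e := (dK K * (je K n e * d + ke K n e) + pe K e)%nat.

Fixpoint esum (k : nat) (f : nat -> R) : R :=
  match k with 0 => 0 | S k' => esum k' f + f k' end.

Lemma esum_ext k f g : (forall e, (e < k)%nat -> f e = g e) -> esum k f = esum k g.
Proof. induction k; intros H; simpl; auto. rewrite IHk, H; auto. Qed.

Lemma esum_zero k f : (forall e, (e < k)%nat -> f e = 0) -> esum k f = 0.
Proof. induction k; intros H; simpl; auto. rewrite IHk, H; auto; lra. Qed.

Lemma esum_single k f e : (e < k)%nat -> (forall e', (e' < k)%nat -> e' <> e -> f e' = 0) -> esum k f = f e.
Proof.
  induction k; intros He H; simpl; [lia|].
  destruct (Nat.eq_dec e k) as [->|Hne].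
  - rewrite esum_zero; [lra|]. intros; apply H; lia.
  - rewrite IHk by (auto; lia). rewrite (H k) by lia. lra.
Qed.

Definition Ew K d n (w : nat -> R) (i : nat) : R :=
  esum 4 (fun e => if Nat.eqb i (idx K d n e) then w e else 0).

Definition hc K n (w : nat -> R) (j i : nat) : C :=
  (esum 4 (fun e => if (Nat.eqb (je K n e) j && Nat.eqb (ke K n e) i && Nat.eqb (pe K e) 0)%bool then w e else 0),
   esum 4 (fun e => if (Nat.eqb (je K n e) j && Nat.eqb (ke K n e) i && Nat.eqb (pe K e) 1)%bool then w e else 0)).

Lemma lin_uniq a b c e D : (b < D)%nat -> (e < D)%nat -> (a * D + b = c * D + e)%nat -> a = c /\ b = e.
Proof. intros Hb He H. assert (a = c) by nia. subst. lia. Qed.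

Lemma dK_pos K : (0 < dK K)%nat.
Proof. destruct K; simpl; lia. Qed.

Lemma ke_lt K n e : (1 <= n)%nat -> (ke K n e < n)%nat.
Proof. intros; unfold ke; apply Nat.mod_upper_bound; lia. Qed.

Lemma pe_lt K e : (pe K e < dK K)%nat.
Proof. unfold pe; apply Nat.mod_upper_bound; pose proof (dK_pos K); lia. Qed.

Lemma e_decomp K n e : (1 <= n)%nat -> e = (dK K * (je K n e * n + ke K n e) + pe K e)%nat.
Proof.
  intros Hn. unfold je, ke, pe, qe. pose proof (dK_pos K).
  rewrite (Nat.mul_comm (e / dK K / n) n), <- Nat.div_mod by lia.
  apply Nat.div_mod; lia.
Qed.

Lemma e_inj K n e e' : (1 <= n)%nat -> je K n e = je K n e' -> ke K n e = ke K n e' -> pe K e = pe K e' -> e = e'.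
Proof. intros Hn H1 H2 H3. rewrite (e_decomp K n e), (e_decomp K n e') by auto. congruence. Qed.

Lemma hc_high K n w j i : (1 <= n)%nat -> (n <= i)%nat -> hc K n w j i = C0.
Proof.
  intros Hn Hi. unfold hc, C0. f_equal; apply esum_zero; intros e _;
  pose proof (ke_lt K n e Hn); destruct (Nat.eqb_spec (ke K n e) i); try lia;
  rewrite andb_false_r, andb_false_l; auto.
Qed.

Lemma idx_eqb K d n e j i p : (1 <= n)%nat -> (n <= d)%nat -> (i < d)%nat -> (p < dK K)%nat ->
  Nat.eqb (dK K * (j * d + i) + p) (idx K d n e) =
  (Nat.eqb (je K n e) j && Nat.eqb (ke K n e) i && Nat.eqb (pe K e) p)%bool.
Proof.
  intros Hn Hnd Hi Hp. pose proof (ke_lt K n e Hn). pose proof (pe_lt K e). unfold idx.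
  destruct (Nat.eqb_spec (dK K * (j * d + i) + p) (dK K * (je K n e * d + ke K n e) + pe K e)) as [E|E].
  - rewrite !(Nat.mul_comm (dK K)) in E. apply lin_uniq in E; auto. destruct E as [E1 E2].
    apply lin_uniq in E1; try lia. destruct E1. subst. rewrite !Nat.eqb_refl. auto.
  - destruct (Nat.eqb_spec (je K n e) j); destruct (Nat.eqb_spec (ke K n e) i);
    destruct (Nat.eqb_spec (pe K e) p); simpl; auto. subst. exfalso; apply E; auto.
Qed.

Lemma coef_Ew K d n y w j i : (1 <= n)%nat -> (n <= d)%nat -> (i < d)%nat ->
  coef K d (fun k => y k + Ew K d n w k) j i = Cadd (coef K d y j i) (hc K n w j i).
Proof.
  intros Hn Hnd Hi. unfold hc, Ew.
  destruct K; unfold coef, Cadd; cbn [fst snd].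
  - f_equal.
    + f_equal. apply esum_ext. intros e _.
      replace (j * d + i)%nat with (dK KR * (j * d + i) + 0)%nat by (simpl; lia).
      rewrite idx_eqb by (simpl; lia). auto.
    + rewrite esum_zero; [lra|]. intros e _. unfold pe; simpl dK. rewrite Nat.mod_1_r. simpl.
      rewrite andb_false_r; auto.
  - f_equal; f_equal; apply esum_ext; intros e _.
    + replace (2 * (j * d + i))%nat with (dK KC * (j * d + i) + 0)%nat by (simpl; lia).
      rewrite idx_eqb by (simpl; lia). auto.
    + replace (2 * (j * d + i) + 1)%nat with (dK KC * (j * d + i) + 1)%nat by (simpl; lia).
      rewrite idx_eqb by (simpl; lia). auto.
Qed.

Lemma ladd_map_app (f g : nat -> C) s a b :
  ladd (map f s ++ a :: nil) (map g s ++ b :: nil) = map (fun i => Cadd (f i) (g i)) s ++ Cadd a b :: nil.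
Proof. induction s; simpl; auto. rewrite IHs; auto. Qed.

Lemma zeros_app1 k : zeros k ++ C0 :: nil = zeros (S k).
Proof. induction k; simpl; auto. rewrite IHk; auto. Qed.

Lemma map_zero_seq (f : nat -> C) a k : (forall i, (a <= i)%nat -> f i = C0) -> map f (seq a k) = zeros k.
Proof. revert a; induction k; intros a H; simpl; auto. rewrite H, IHk; auto; intros; apply H; lia. Qed.

Definition hw K n w j : list C := map (hc K n w j) (seq 0 n).

Lemma L_Ew K d n y w j : (1 <= n)%nat -> (n <= d)%nat ->
  L K d (fun k => y k + Ew K d n w k) j = ladd (L K d y j) (hw K n w j ++ zeros (S (d - n))).
Proof.
  intros Hn Hnd. unfold L.
  assert (E : hw K n w j ++ zeros (S (d - n)) = map (hc K n w j) (seq 0 d) ++ C0 :: nil).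
  { unfold hw. replace d with (n + (d - n))%nat at 2 by lia. rewrite seq_app, map_app.
    rewrite (map_zero_seq _ (0 + n)) by (intros; apply hc_high; lia).
    rewrite <- app_assoc. f_equal. rewrite zeros_app1; auto. }
  rewrite E, ladd_map_app. f_equal.
  - apply map_ext_in. intros i Hi. apply in_seq in Hi. apply coef_Ew; lia.
  - f_equal. cring.
Qed.

Definition Gx K d n (y : nat -> R) (t : R) (e : nat) : R :=
  let c := nth (ke K n e) (taylor (Copp (RtoC t)) n (map Copp (taylor (RtoC t) n (L K d y (je K n e))))) C0 in
  if Nat.eqb (pe K e) 0 then fst c else snd c.

Lemma je_lt K m n e : (1 <= n)%nat -> (4 <= dK K * m * n)%nat -> (e < 4)%nat -> (je K n e < m)%nat.
Proof.
  intros Hn H4 He. pose proof (e_decomp K n e Hn). pose proof (ke_lt K n e Hn).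
  pose proof (dK_pos K). destruct (Nat.lt_ge_cases (je K n e) m) as [|Hge]; auto.
  exfalso. assert (m * n <= je K n e * n)%nat by (apply Nat.mul_le_mono_r; auto).
  assert (dK K * (m * n) <= dK K * (je K n e * n))%nat by (apply Nat.mul_le_mono_l; auto).
  rewrite Nat.mul_assoc in H3. lia.
Qed.

Lemma length_L K d y j : length (L K d y j) = S d.
Proof. unfold L. rewrite length_app, length_map, length_seq. simpl. lia. Qed.

Lemma extract K d m n y w t : (1 <= n)%nat -> (n <= d)%nat -> (4 <= dK K * m * n)%nat ->
  Z K d m n (fun i => y i + Ew K d n w i) t -> forall e, (e < 4)%nat -> w e = Gx K d n y t e.
Proof.
  intros Hn Hnd H4 HZ e He. set (j := je K n e).
  assert (Hj : (j < m)%nat) by (apply je_lt; auto).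
  specialize (HZ j Hj). rewrite L_Ew in HZ by auto.
  assert (Hl : length (L K d y j) = length (hw K n w j ++ zeros (S (d - n)))).
  { rewrite length_L, length_app. unfold hw. rewrite length_map, length_seq.
    assert (forall k, length (zeros k) = k) by (induction k; simpl; auto). rewrite H. lia. }
  rewrite taylor_add in HZ by auto.
  apply ladd_allz in HZ; [|rewrite !taylor_len; auto].
  rewrite taylor_app0 in HZ by (unfold hw; rewrite length_map, length_seq; lia).
  assert (Hh : hw K n w j = taylor (Copp (RtoC t)) n (map Copp (taylor (RtoC t) n (L K d y j)))).
  { rewrite <- HZ. rewrite roundtrip; auto. unfold hw; rewrite length_map, length_seq; auto. }
  unfold Gx. fold j. rewrite <- Hh. unfold hw.
  pose proof (ke_lt K n e Hn).
  rewrite (nth_indep _ C0 (hc K n w j 0)) by (rewrite length_map, length_seq; auto).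
  rewrite map_nth, seq_nth by auto. rewrite Nat.add_0_l.
  pose proof (pe_lt K e).
  unfold hc; cbn [fst snd].
  destruct (Nat.eqb_spec (pe K e) 0) as [Hp|Hp].
  - rewrite (esum_single 4 _ e) by
      (auto; intros e' He' Hne; destruct (Nat.eqb_spec (je K n e') j); destruct (Nat.eqb_spec (ke K n e') (ke K n e));
       destruct (Nat.eqb_spec (pe K e') 0); simpl; auto; exfalso; apply Hne; apply (e_inj K n); auto; congruence).
    unfold j. rewrite !Nat.eqb_refl, Hp. simpl. auto.
  - assert (Hp1 : pe K e = 1%nat) by (destruct K; simpl in *; lia).
    rewrite (esum_single 4 _ e) by
      (auto; intros e' He' Hne; destruct (Nat.eqb_spec (je K n e') j); destruct (Nat.eqb_spec (ke K n e') (ke K n e));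
       destruct (Nat.eqb_spec (pe K e') 1); simpl; auto; exfalso; apply Hne; apply (e_inj K n); auto; congruence).
    unfold j. rewrite !Nat.eqb_refl, Hp1. simpl. auto.
Qed.

Lemma Ew_scale K d n c w i : Ew K d n (fun e => c * w e) i = c * Ew K d n w i.
Proof. unfold Ew; simpl. repeat match goal with |- context [Nat.eqb ?a ?b] => destruct (Nat.eqb a b) end; ring. Qed.

Fixpoint distn (D : nat) (p q : nat -> R) : R :=
  match D with 0 => 0 | S D' => Rmax (Rabs (p D' - q D')) (distn D' p q) end.

Lemma distn_nonneg D p q : 0 <= distn D p q.
Proof. induction D; simpl; [lra|]. eapply Rle_trans; [apply IHD|apply Rmax_r]. Qed.

Lemma distn_ge D p q i : (i < D)%nat -> Rabs (p i - q i) <= distn D p q.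
Proof.
  induction D; intros Hi; [lia|]. simpl. destruct (Nat.eq_dec i D) as [->|Hne].
  - apply Rmax_l.
  - eapply Rle_trans; [apply IHD; lia|apply Rmax_r].
Qed.

Lemma distn_le D p q c : 0 <= c -> (forall i, (i < D)%nat -> Rabs (p i - q i) <= c) -> distn D p q <= c.
Proof.
  induction D; intros Hc H; simpl; auto. apply Rmax_lub; auto.
Qed.

Definition BL (D : nat) (S : (nat -> R) -> Prop) (f : (nat -> R) -> R) : Prop :=
  exists M Lc, 0 <= M /\ 0 <= Lc /\ (forall p, S p -> Rabs (f p) <= M) /\
    (forall p q, S p -> S q -> Rabs (f p - f q) <= Lc * distn D p q).

Section BLsec.
Variable D : nat.
Variable Sx : (nat -> R) -> Prop.

Lemma BL_ext f g : (forall p, Sx p -> f p = g p) -> BL D Sx f -> BL D Sx g.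
Proof.
  intros E [M [Lc [HM [HL [H1 H2]]]]]. exists M, Lc. repeat split; auto.
  - intros p Hp; rewrite <- E; auto.
  - intros p q Hp Hq; rewrite <- !E; auto.
Qed.

Lemma BL_const c : BL D Sx (fun _ => c).
Proof. exists (Rabs c), 0. repeat split; try lra; auto using Rabs_pos, Rle_refl.
  intros. unfold Rminus; rewrite Rplus_opp_r, Rabs_R0. pose proof (distn_nonneg D p q). nra. Qed.

Lemma BL_proj i B : (i < D)%nat -> (forall p, Sx p -> Rabs (p i) <= B) -> BL D Sx (fun p => p i).
Proof.
  intros Hi HB. exists (Rabs B), 1. repeat split; try lra; auto using Rabs_pos.
  - intros p Hp. eapply Rle_trans; [apply HB; auto|apply Rle_abs].
  - intros p q _ _. rewrite Rmult_1_l. apply distn_ge; auto.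
Qed.

Lemma BL_add f g : BL D Sx f -> BL D Sx g -> BL D Sx (fun p => f p + g p).
Proof.
  intros [M1 [L1 [HM1 [HL1 [B1 C1']]]]] [M2 [L2 [HM2 [HL2 [B2 C2']]]]].
  exists (M1 + M2), (L1 + L2). repeat split; try lra.
  - intros p Hp. eapply Rle_trans; [apply Rabs_triang|]. specialize (B1 p Hp); specialize (B2 p Hp); lra.
  - intros p q Hp Hq. replace (f p + g p - (f q + g q)) with ((f p - f q) + (g p - g q)) by ring.
    eapply Rle_trans; [apply Rabs_triang|]. specialize (C1' p q Hp Hq); specialize (C2' p q Hp Hq). lra.
Qed.

Lemma BL_opp f : BL D Sx f -> BL D Sx (fun p => - f p).
Proof.
  intros [M1 [L1 [HM1 [HL1 [B1 C1']]]]]. exists M1, L1. repeat split; auto.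
  - intros p Hp. rewrite Rabs_Ropp; auto.
  - intros p q Hp Hq. replace (- f p - - f q) with (- (f p - f q)) by ring. rewrite Rabs_Ropp; auto.
Qed.

Lemma BL_sub f g : BL D Sx f -> BL D Sx g -> BL D Sx (fun p => f p - g p).
Proof. intros. apply BL_add; auto. apply BL_opp; auto. Qed.

Lemma BL_mul f g : BL D Sx f -> BL D Sx g -> BL D Sx (fun p => f p * g p).
Proof.
  intros [M1 [L1 [HM1 [HL1 [B1 C1']]]]] [M2 [L2 [HM2 [HL2 [B2 C2']]]]].
  exists (M1 * M2), (M1 * L2 + M2 * L1). repeat split; try nra.
  - intros p Hp. rewrite Rabs_mult. specialize (B1 p Hp); specialize (B2 p Hp).
    apply Rmult_le_compat; auto using Rabs_pos.
  - intros p q Hp Hq. replace (f p * g p - f q * g q) with (f p * (g p - g q) + g q * (f p - f q)) by ring.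
    eapply Rle_trans; [apply Rabs_triang|]. rewrite !Rabs_mult.
    specialize (B1 p Hp); specialize (B2 q Hq); specialize (C1' p q Hp Hq); specialize (C2' p q Hp Hq).
    pose proof (Rabs_pos (f p)); pose proof (Rabs_pos (g q)); pose proof (distn_nonneg D p q).
    pose proof (Rabs_pos (g p - g q)); pose proof (Rabs_pos (f p - f q)).
    assert (Rabs (f p) * Rabs (g p - g q) <= M1 * (L2 * distn D p q)) by (apply Rmult_le_compat; auto).
    assert (Rabs (g q) * Rabs (f p - f q) <= M2 * (L1 * distn D p q)) by (apply Rmult_le_compat; auto).
    nra.
Qed.

Lemma BL_abs f : BL D Sx f -> BL D Sx (fun p => Rabs (f p)).
Proof.
  intros [M1 [L1 [HM1 [HL1 [B1 C1']]]]]. exists M1, L1. repeat split; auto.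
  - intros p Hp. rewrite Rabs_Rabsolu; auto.
  - intros p q Hp Hq. eapply Rle_trans; [apply Rabs_triang_inv2|]. auto.
Qed.

Lemma BL_inv f b : 0 < b -> (forall p, Sx p -> b <= f p) -> BL D Sx f -> BL D Sx (fun p => / f p).
Proof.
  intros Hb Hf [M1 [L1 [HM1 [HL1 [B1 C1']]]]]. exists (/ b), (L1 / (b * b)).
  repeat split.
  - left; apply Rinv_0_lt_compat; auto.
  - apply Rmult_le_pos; auto. left; apply Rinv_0_lt_compat; nra.
  - intros p Hp. specialize (Hf p Hp). rewrite Rabs_pos_eq by (left; apply Rinv_0_lt_compat; lra).
    apply Rinv_le_contravar; lra.
  - intros p q Hp Hq. pose proof (Hf p Hp); pose proof (Hf q Hq).
    replace (/ f p - / f q) with ((f q - f p) / (f p * f q)) by (field; lra).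
    unfold Rdiv. rewrite Rabs_mult, Rabs_inv, (Rabs_pos_eq (f p * f q)) by nra.
    rewrite <- Rabs_Ropp. replace (- (f q - f p)) with (f p - f q) by ring.
    specialize (C1' p q Hp Hq).
    assert (/ (f p * f q) <= / (b * b)) by (apply Rinv_le_contravar; nra).
    pose proof (distn_nonneg D p q). pose proof (Rabs_pos (f p - f q)).
    assert (0 < / (f p * f q)) by (apply Rinv_0_lt_compat; nra).
    apply (Rle_trans _ ((L1 * distn D p q) * / (b * b))).
    + apply Rmult_le_compat; [apply Rabs_pos|lra|exact C1'|assumption].
    + right. unfold Rdiv. ring.
Qed.

Lemma BL_esum k (f : nat -> (nat -> R) -> R) : (forall j, (j < k)%nat -> BL D Sx (f j)) ->
  BL D Sx (fun p => esum k (fun j => f j p)).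
Proof.
  induction k; intros H; simpl.
  - apply BL_const.
  - apply BL_add; auto.
Qed.

Definition BLC (f : (nat -> R) -> C) := BL D Sx (fun p => fst (f p)) /\ BL D Sx (fun p => snd (f p)).

Lemma BLC_const c : BLC (fun _ => c).
Proof. split; apply BL_const. Qed.

Lemma BLC_add f g : BLC f -> BLC g -> BLC (fun p => Cadd (f p) (g p)).
Proof. intros [] []; split; unfold Cadd; simpl; apply BL_add; auto. Qed.

Lemma BLC_sub f g : BLC f -> BLC g -> BLC (fun p => Csub (f p) (g p)).
Proof. intros [] []; split; unfold Csub; simpl; apply BL_sub; auto. Qed.

Lemma BLC_opp f : BLC f -> BLC (fun p => Copp (f p)).
Proof. intros []; split; unfold Copp; simpl; apply BL_opp; auto. Qed.

Lemma BLC_mul f g : BLC f -> BLC g -> BLC (fun p => Cmul (f p) (g p)).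
Proof. intros [] []; split; unfold Cmul; simpl; [apply BL_sub|apply BL_add]; apply BL_mul; auto. Qed.

Lemma BLC_RtoC f : BL D Sx f -> BLC (fun p => RtoC (f p)).
Proof. intros H; split; unfold RtoC; simpl; auto. apply BL_const. Qed.

Lemma BL_cn f : BLC f -> BL D Sx (fun p => cn (f p)).
Proof. intros []; unfold cn; apply BL_add; apply BL_abs; auto. Qed.

Lemma BLC_ext f g : (forall p, f p = g p) -> BLC f -> BLC g.
Proof. intros E [H1 H2]; split; [apply (BL_ext (fun p => fst (f p)))|apply (BL_ext (fun p => snd (f p)))]; auto; intros; rewrite E; auto. Qed.

Definition BLL (lf : (nat -> R) -> list C) :=
  exists len, (forall p, length (lf p) = len) /\ forall k, BLC (fun p => nth k (lf p) C0).

Lemma BLL_nth lf k : BLL lf -> BLC (fun p => nth k (lf p) C0).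
Proof. intros [len [_ H]]; auto. Qed.

Lemma sdiv_cons_ne t c p : p <> nil -> sdiv t (c :: p) =
  (snd (sdiv t p) :: fst (sdiv t p), Cadd c (Cmul t (snd (sdiv t p)))).
Proof. destruct p; [congruence|]. intros; reflexivity. Qed.

Lemma BLL_sdiv len : forall lf tf, (forall p, length (lf p) = len) -> (forall k, BLC (fun p => nth k (lf p) C0)) -> BLC tf ->
  BLL (fun p => fst (sdiv (tf p) (lf p))) /\ BLC (fun p => snd (sdiv (tf p) (lf p))).
Proof.
  induction len; intros lf tf Hl Hk Ht.
  - assert (E : forall p, lf p = nil) by (intros p; specialize (Hl p); destruct (lf p); simpl in *; auto; lia).
    split.
    + exists 0%nat. split; [intros p; rewrite E; auto|]. intros k. apply (BLC_ext (fun _ => C0)).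
      intros p; rewrite E; destruct k; auto. apply BLC_const.
    + apply (BLC_ext (fun _ => C0)). intros p; rewrite E; auto. apply BLC_const.
  - set (tl' := fun p => tl (lf p)).
    assert (E : forall p, lf p = nth 0 (lf p) C0 :: tl' p).
    { intros p; specialize (Hl p); unfold tl'; destruct (lf p); simpl in *; auto; lia. }
    assert (Hl' : forall p, length (tl' p) = len) by (intros p; specialize (Hl p); unfold tl'; destruct (lf p); simpl in *; lia).
    assert (Hk' : forall k, BLC (fun p => nth k (tl' p) C0)).
    { intros k. apply (BLC_ext (fun p => nth (Datatypes.S k) (lf p) C0)); [|auto].
      intros p. rewrite (E p) at 1. reflexivity. }
    destruct len as [|len'].
    + assert (E0 : forall p, tl' p = nil) by (intros p; specialize (Hl' p); destruct (tl' p); simpl in *; auto; lia).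
      split.
      * exists 0%nat. split.
        -- intros p. rewrite E, E0. reflexivity.
        -- intros k. apply (BLC_ext (fun _ => C0)); [|apply BLC_const]. intros p. rewrite E, E0. destruct k; auto.
      * apply (BLC_ext (fun p => nth 0 (lf p) C0)); auto. intros p. rewrite (E p) at 2. rewrite E0. reflexivity.
    + destruct (IHlen tl' tf Hl' Hk' Ht) as [[len2 [Hl2 Hk2]] Hr].
      assert (Ne : forall p, tl' p <> nil) by (intros p; specialize (Hl' p); destruct (tl' p); simpl in *; congruence).
      split.
      * exists (Datatypes.S len2). split.
        -- intros p. rewrite E, sdiv_cons_ne by auto. simpl. rewrite Hl2; auto.
        -- intros k. destruct k.
           ++ apply (BLC_ext (fun p => snd (sdiv (tf p) (tl' p)))); auto.
              intros p. rewrite (E p), sdiv_cons_ne by auto. reflexivity.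
           ++ apply (BLC_ext (fun p => nth k (fst (sdiv (tf p) (tl' p))) C0)); auto.
              intros p. rewrite (E p), sdiv_cons_ne by auto. reflexivity.
      * apply (BLC_ext (fun p => Cadd (nth 0 (lf p) C0) (Cmul (tf p) (snd (sdiv (tf p) (tl' p)))))).
        -- intros p. rewrite (E p) at 2. rewrite sdiv_cons_ne by auto. reflexivity.
        -- apply BLC_add; auto. apply BLC_mul; auto.
Qed.

Lemma BLL_taylor k : forall lf tf, BLL lf -> BLC tf -> BLL (fun p => taylor (tf p) k (lf p)).
Proof.
  induction k; intros lf tf [len [Hl Hk]] Ht.
  - exists 0%nat. split; [intros; auto|]. intros k. apply (BLC_ext (fun _ => C0)); [intros; destruct k; auto|apply BLC_const].
  - destruct (BLL_sdiv len lf tf Hl Hk Ht) as [Hq Hr].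
    destruct (IHk _ tf Hq Ht) as [len3 [Hl3 Hk3]].
    exists (Datatypes.S len3). split.
    + intros p; simpl; rewrite Hl3; auto.
    + intros [|k']; simpl; auto.
Qed.

Lemma BLL_map_Copp lf : BLL lf -> BLL (fun p => map Copp (lf p)).
Proof.
  intros [len [Hl Hk]]. exists len. split; [intros; rewrite length_map; auto|].
  intros k. apply (BLC_ext (fun p => Copp (nth k (lf p) C0))).
  - intros p. generalize (lf p). clear. intros l. revert k; induction l; intros [|k]; simpl; auto;
    unfold Copp, C0; simpl; apply Cext; simpl; ring.
  - apply BLC_opp; auto.
Qed.

Definition listnorm (l : list C) : R := fold_right (fun c a => cn c + a) 0 l.

Lemma BL_listnorm len : forall lf, (forall p, length (lf p) = len) ->
  (forall k, BLC (fun p => nth k (lf p) C0)) -> BL D Sx (fun p => listnorm (lf p)).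
Proof.
  induction len; intros lf Hl Hk.
  - apply (BL_ext (fun _ => 0)); [|apply BL_const].
    intros p _. specialize (Hl p). destruct (lf p); simpl in *; auto; lia.
  - apply (BL_ext (fun p => cn (nth 0 (lf p) C0) + listnorm (tl (lf p)))).
    + intros p _. specialize (Hl p). destruct (lf p); simpl in *; auto; lia.
    + apply BL_add; [apply BL_cn; auto|]. apply IHlen.
      * intros p. specialize (Hl p). destruct (lf p); simpl in *; lia.
      * intros k. apply (BLC_ext (fun p => nth (Datatypes.S k) (lf p) C0)); auto.
        intros p. destruct (lf p); simpl; auto. destruct k; auto.
Qed.

Lemma BLL_listnorm lf : BLL lf -> BL D Sx (fun p => listnorm (lf p)).
Proof. intros [len [Hl Hk]]. eapply BL_listnorm; eauto. Qed.

End BLsec.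

Lemma nth_map_seq (f : nat -> C) k d dflt : (k < d)%nat -> nth k (map f (seq 0 d)) dflt = f k.
Proof. intros H. rewrite (nth_indep _ dflt (f 0%nat)) by (rewrite length_map, length_seq; auto).
  rewrite map_nth, seq_nth; auto. Qed.

Lemma nth_L K d y j k : nth k (L K d y j) C0 =
  if Nat.ltb k d then coef K d y j k else if Nat.eqb k d then C1 else C0.
Proof.
  unfold L. destruct (Nat.ltb_spec k d).
  - rewrite app_nth1 by (rewrite length_map, length_seq; auto). apply nth_map_seq; auto.
  - rewrite app_nth2 by (rewrite length_map, length_seq; auto). rewrite length_map, length_seq.
    destruct (Nat.eqb_spec k d).
    + subst. rewrite Nat.sub_diag. reflexivity.
    + destruct (k - d)%nat eqn:E; [lia|]. simpl. destruct n0; reflexivity.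
Qed.

Section BL2.
Variable D : nat.
Variable Sx : (nat -> R) -> Prop.

Lemma BLL_L K d m (Y : (nat -> R) -> nat -> R) j : (j < m)%nat ->
  (forall i, (i < dK K * d * m)%nat -> BL D Sx (fun p => Y p i)) -> BLL D Sx (fun p => L K d (Y p) j).
Proof.
  intros Hj HY. exists (Datatypes.S d). split; [intros; apply length_L|].
  intros k. apply (BLC_ext D Sx (fun p => if Nat.ltb k d then coef K d (Y p) j k else if Nat.eqb k d then C1 else C0)).
  - intros p. rewrite nth_L. reflexivity.
  - destruct (Nat.ltb_spec k d).
    + destruct K; split; simpl; try apply BL_const; apply HY; simpl; nia.
    + destruct (Nat.eqb k d); apply BLC_const.
Qed.

Definition Nphi K d m n (y : nat -> R) (t : R) : R :=
  esum m (fun j => listnorm (taylor (RtoC t) n (L K d y j))).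

Lemma BL_Nphi K d m n (Y : (nat -> R) -> nat -> R) (Tt : (nat -> R) -> R) :
  (forall i, (i < dK K * d * m)%nat -> BL D Sx (fun p => Y p i)) -> BL D Sx Tt ->
  BL D Sx (fun p => Nphi K d m n (Y p) (Tt p)).
Proof.
  intros HY HT. unfold Nphi. apply (BL_esum D Sx m (fun j p => listnorm (taylor (RtoC (Tt p)) n (L K d (Y p) j)))).
  intros j Hj. apply BLL_listnorm. apply BLL_taylor; [apply BLL_L with (m := m); auto|]. apply BLC_RtoC; auto.
Qed.

Lemma BL_Gx K d m n (Y : (nat -> R) -> nat -> R) (Tt : (nat -> R) -> R) e :
  (je K n e < m)%nat ->
  (forall i, (i < dK K * d * m)%nat -> BL D Sx (fun p => Y p i)) -> BL D Sx Tt ->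
  BL D Sx (fun p => Gx K d n (Y p) (Tt p) e).
Proof.
  intros Hj HY HT. unfold Gx.
  assert (H : BLC D Sx (fun p => nth (ke K n e) (taylor (Copp (RtoC (Tt p))) n
              (map Copp (taylor (RtoC (Tt p)) n (L K d (Y p) (je K n e))))) C0)).
  { apply BLL_nth. apply BLL_taylor.
    - apply BLL_map_Copp. apply BLL_taylor; [apply BLL_L with (m := m); auto|]. apply BLC_RtoC; auto.
    - apply BLC_opp. apply BLC_RtoC; auto. }
  destruct H as [H1 H2]. destruct (Nat.eqb (pe K e) 0); auto.
Qed.
End BL2.

Lemma listnorm_nonneg l : 0 <= listnorm l.
Proof. induction l; simpl; [lra|]. pose proof (cn_nonneg a); lra. Qed.

Lemma listnorm_allz l : allz l -> listnorm l = 0.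
Proof. induction 1; simpl; auto. rewrite IHForall, H, cn_C0; ring. Qed.

Lemma listnorm_zero l : listnorm l = 0 -> allz l.
Proof.
  induction l; simpl; intros H; constructor.
  - pose proof (cn_nonneg a); pose proof (listnorm_nonneg l). apply cn_zero; lra.
  - pose proof (cn_nonneg a); pose proof (listnorm_nonneg l). apply IHl; lra.
Qed.

Lemma esum_nonneg k f : (forall e, (e < k)%nat -> 0 <= f e) -> 0 <= esum k f.
Proof. induction k; simpl; intros H; [lra|]. pose proof (H k ltac:(lia)). pose proof (IHk ltac:(auto)). lra. Qed.

Lemma Nphi_nonneg K d m n y t : 0 <= Nphi K d m n y t.
Proof. apply esum_nonneg; intros; apply listnorm_nonneg. Qed.

Lemma Nphi_pos K d m n y t : ~ Z K d m n y t -> 0 < Nphi K d m n y t.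
Proof.
  intros HZ. destruct (Nphi_nonneg K d m n y t) as [|E]; auto. exfalso; apply HZ.
  unfold Nphi in E. intros j Hj. apply listnorm_zero.
  revert E Hj. generalize m. clear m HZ. intros m. induction m; intros E Hj; [lia|]. simpl in E.
  pose proof (esum_nonneg m (fun j => listnorm (taylor (RtoC t) n (L K d y j))) (fun e _ => listnorm_nonneg _)).
  pose proof (listnorm_nonneg (taylor (RtoC t) n (L K d y m))).
  destruct (Nat.eq_dec j m) as [->|Hne]; [lra|]. apply IHm; [lra|lia].
Qed.

Lemma Nphi_noZ K d m n y t : 0 < Nphi K d m n y t -> ~ Z K d m n y t.
Proof.
  intros H HZ. unfold Nphi in H. rewrite esum_zero in H; [lra|].
  intros j Hj. apply listnorm_allz. apply HZ; auto.
Qed.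

Lemma fin_max (n : nat) (P : nat -> R -> Prop) :
  (forall i a b, P i a -> a <= b -> P i b) -> (forall i, (i < n)%nat -> exists a, P i a) ->
  exists a, forall i, (i < n)%nat -> P i a.
Proof.
  intros Hm. induction n; intros H.
  - exists 0; intros; lia.
  - destruct IHn as [a Ha]; [intros; apply H; lia|]. destruct (H n ltac:(lia)) as [b Hb].
    exists (Rmax a b). intros i Hi. destruct (Nat.eq_dec i n) as [->|Hne].
    + apply (Hm _ b); auto. apply Rmax_r.
    + apply (Hm _ a); [apply Ha; lia|apply Rmax_l].
Qed.

Lemma fin_min (n : nat) (P : nat -> R -> Prop) :
  (forall i a b, P i a -> 0 < b <= a -> P i b) -> (forall i, (i < n)%nat -> exists a, 0 < a /\ P i a) ->
  exists a, 0 < a /\ forall i, (i < n)%nat -> P i a.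
Proof.
  intros Hm. induction n; intros H.
  - exists 1; split; [lra|]; intros; lia.
  - destruct IHn as [a [Ha0 Ha]]; [intros; apply H; lia|]. destruct (H n ltac:(lia)) as [b [Hb0 Hb]].
    exists (Rmin a b). split; [apply Rmin_glb_lt; auto|]. intros i Hi. destruct (Nat.eq_dec i n) as [->|Hne].
    + apply (Hm _ b); auto. split; [apply Rmin_glb_lt; auto|apply Rmin_r].
    + apply (Hm _ a); [apply Ha; lia|]. split; [apply Rmin_glb_lt; auto|apply Rmin_l].
Qed.

Fixpoint enc (b : nat) (f : nat -> nat) (D : nat) : nat :=
  match D with 0 => 0%nat | S D' => (f 0%nat + b * enc b (fun c => f (S c)) D')%nat end.

Lemma enc_lt b D : forall f, (forall c, (c < D)%nat -> (f c < b)%nat) -> (enc b f D < b ^ D)%nat.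
Proof.
  induction D; intros f H; simpl; [lia|].
  assert (enc b (fun c => f (S c)) D < b ^ D)%nat by (apply IHD; intros; apply H; lia).
  assert (f 0%nat < b)%nat by (apply H; lia). nia.
Qed.

Lemma enc_inj b D : forall f g, (forall c, (c < D)%nat -> (f c < b)%nat /\ (g c < b)%nat) ->
  enc b f D = enc b g D -> forall c, (c < D)%nat -> f c = g c.
Proof.
  induction D; intros f g H E c Hc; [lia|]. simpl in E.
  destruct (H 0%nat ltac:(lia)) as [H1 H2].
  rewrite !(Nat.mul_comm b) in E. rewrite !(Nat.add_comm (f 0%nat)), (Nat.add_comm (g 0%nat)) in E.
  apply lin_uniq in E; auto. destruct E as [E1 E2].
  destruct c; auto.
  apply (IHD (fun c => f (S c)) (fun c => g (S c))); auto; [|lia].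
  intros c' Hc'; apply H; lia.
Qed.

Definition digit (b tau c : nat) : nat := ((tau / b ^ c) mod b)%nat.

Lemma digits_inj b E : (1 <= b)%nat -> forall tau tau', (tau < b ^ E)%nat -> (tau' < b ^ E)%nat ->
  (forall c, (c < E)%nat -> digit b tau c = digit b tau' c) -> tau = tau'.
Proof.
  intros Hb. induction E; intros tau tau' H1 H2 H; simpl in *; [lia|].
  assert (E0 := H 0%nat ltac:(lia)). unfold digit in E0. rewrite Nat.pow_0_r, !Nat.div_1_r in E0.
  assert (Hq : (tau / b = tau' / b)%nat).
  { apply IHE.
    - apply Nat.div_lt_upper_bound; lia.
    - apply Nat.div_lt_upper_bound; lia.
    - intros c Hc. specialize (H (S c) ltac:(lia)). unfold digit in *. simpl in H.
      rewrite <- !Nat.div_div in H by (try lia; apply Nat.pow_nonzero; lia). auto. }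
  rewrite (Nat.div_mod tau b), (Nat.div_mod tau' b) by lia. congruence.
Qed.

Lemma digit_lt b tau c : (1 <= b)%nat -> (digit b tau c < b)%nat.
Proof. intros; unfold digit; apply Nat.mod_upper_bound; lia. Qed.

Lemma cell_exists n y : (1 <= n)%nat -> 0 <= y <= INR n -> exists k, (k < n)%nat /\ INR k <= y <= INR k + 1.
Proof.
  induction n; intros Hn Hy; [lia|].
  destruct (Nat.eq_dec n 0) as [->|Hne].
  - exists 0%nat. simpl in *. split; [lia|lra].
  - destruct (Rle_dec y (INR n)) as [Hle|Hgt].
    + destruct (IHn ltac:(lia) ltac:(lra)) as [k [Hk1 Hk2]]. exists k; split; auto; lia.
    + exists n. rewrite S_INR in Hy. split; [lia|lra].
Qed.

Lemma INR_close a b : Rabs (INR a - INR b) < 1 -> a = b.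
Proof.
  intros H. destruct (Nat.lt_trichotomy a b) as [Hab|[->|Hab]]; auto; exfalso.
  - assert (INR (S a) <= INR b) by (apply le_INR; lia). rewrite S_INR in H0.
    rewrite Rabs_left1 in H by lra. lra.
  - assert (INR (S b) <= INR a) by (apply le_INR; lia). rewrite S_INR in H0.
    rewrite Rabs_pos_eq in H by lra. lra.
Qed.

Lemma nat_above x : exists n : nat, x < INR n.
Proof.
  destruct (archimed x) as [H1 _].
  destruct (Z_lt_le_dec 0 (up x)) as [Hp|Hn].
  - exists (Z.to_nat (up x)). rewrite INR_IZR_INZ, Z2Nat.id by lia. auto.
  - exists 0%nat. simpl. apply IZR_le in Hn. lra.
Qed.

Definition box (Dp : nat) (p : nat -> R) : Prop := forall i, (i < Dp)%nat -> 0 <= p i <= 1.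

Lemma count_avoid Dp E Kf (F : nat -> (nat -> R) -> nat -> R) (eta : R) :
  (Dp < E)%nat -> 0 < eta ->
  (forall l c, (l < Kf)%nat -> (c < E)%nat -> BL Dp (box Dp) (fun p => F l p c)) ->
  exists w : nat -> R, (forall c, (c < E)%nat -> 0 <= w c <= eta) /\
    forall l p, (l < Kf)%nat -> box Dp p -> exists c, (c < E)%nat /\ F l p c <> w c.
Proof.
  intros HDE Heta HBL.
  destruct (classic (exists w : nat -> R, (forall c, (c < E)%nat -> 0 <= w c <= eta) /\
    forall l p, (l < Kf)%nat -> box Dp p -> exists c, (c < E)%nat /\ F l p c <> w c)) as [Hw|Hno]; auto.
  exfalso.
  assert (Hall : forall w : nat -> R, (forall c, (c < E)%nat -> 0 <= w c <= eta) ->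
     exists lp : nat * (nat -> R), (fst lp < Kf)%nat /\ box Dp (snd lp) /\
        forall c, (c < E)%nat -> F (fst lp) (snd lp) c = w c).
  { intros w Hw. apply NNPP. intros Hn. apply Hno. exists w. split; auto.
    intros l p Hl Hp. apply NNPP. intros H'. apply Hn. exists (l, p). simpl. split; [auto|split; [auto|]].
    intros c Hc. apply NNPP. intros H''. apply H'. exists c. auto. }
  destruct (fin_max Kf (fun l Lc => 0 <= Lc /\ forall c, (c < E)%nat -> forall p q, box Dp p -> box Dp q ->
              Rabs (F l p c - F l q c) <= Lc * distn Dp p q)) as [Lc HLc].
  { intros i a b [Ha H] Hab. split; [lra|]. intros c Hc p q Hp Hq. eapply Rle_trans; [apply H; auto|].
    apply Rmult_le_compat_r; auto. apply distn_nonneg. }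
  { intros l Hl. destruct (fin_max E (fun c Lc => 0 <= Lc /\ forall p q, box Dp p -> box Dp q ->
              Rabs (F l p c - F l q c) <= Lc * distn Dp p q)) as [Lc2 HLc2].
    { intros i a b [Ha H] Hab. split; [lra|]. intros p q Hp Hq. eapply Rle_trans; [apply H; auto|].
      apply Rmult_le_compat_r; auto. apply distn_nonneg. }
    { intros c Hc. destruct (HBL l c Hl Hc) as [M0 [L0 [_ [HL0 [_ H0]]]]]. exists L0. auto. }
    exists (Rmax 0 Lc2). split; [apply Rmax_l|]. intros c Hc p q Hp Hq.
    destruct (HLc2 c Hc) as [_ H]. eapply Rle_trans; [apply H; auto|].
    apply Rmult_le_compat_r; [apply distn_nonneg|apply Rmax_r]. }
  assert (HLc0 : 0 <= Lc).
  { destruct Kf. 2: { destruct (HLc 0%nat ltac:(lia)); auto. }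
    destruct (Hall (fun _ => 0)) as [lp [Hl _]]; [intros; lra|lia]. }
  destruct (nat_above (Lc / eta)) as [a0 Ha0].
  set (alpha := S a0).
  assert (Halpha : Lc < eta * INR alpha).
  { unfold alpha. rewrite S_INR. apply (Rmult_lt_compat_l eta) in Ha0; auto.
    replace (eta * (Lc / eta)) with Lc in Ha0 by (field; lra). lra. }
  set (M := (Kf * alpha ^ Dp + 1)%nat).
  set (M' := (alpha * M)%nat).
  set (b := S M).
  assert (HM : (1 <= M)%nat) by (unfold M; lia).
  assert (HM' : (1 <= M')%nat) by (unfold M', alpha; nia).
  assert (HMr : 0 < INR M) by (apply lt_0_INR; lia).
  assert (HM'r : 0 < INR M') by (apply lt_0_INR; lia).
  set (wg := fun tau c => eta * INR (digit b tau c) / INR M).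
  assert (Hwg : forall tau c, 0 <= wg tau c <= eta).
  { intros tau c. unfold wg. pose proof (digit_lt b tau c ltac:(unfold b; lia)).
    assert (INR (digit b tau c) <= INR M) by (apply le_INR; unfold b in *; lia).
    pose proof (pos_INR (digit b tau c)). split.
    - apply Rmult_le_pos; [apply Rmult_le_pos; lra|left; apply Rinv_0_lt_compat; auto].
    - apply (Rmult_le_reg_r (INR M)); auto. unfold Rdiv. rewrite Rmult_assoc, Rinv_l by lra. nra. }
  set (sel := fun tau => epsilon (inhabits (0%nat, fun _ : nat => 0))
     (fun lp : nat * (nat -> R) => (fst lp < Kf)%nat /\ box Dp (snd lp) /\
        forall c, (c < E)%nat -> F (fst lp) (snd lp) c = wg tau c)).
  assert (Hsel : forall tau, (fst (sel tau) < Kf)%nat /\ box Dp (snd (sel tau)) /\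
        forall c, (c < E)%nat -> F (fst (sel tau)) (snd (sel tau)) c = wg tau c).
  { intros tau. unfold sel. apply epsilon_spec. apply Hall. intros; apply Hwg. }
  set (cell := fun x : R => epsilon (inhabits 0%nat)
     (fun k => (k < M')%nat /\ INR k <= x * INR M' <= INR k + 1)).
  assert (Hcell : forall x, 0 <= x <= 1 -> (cell x < M')%nat /\ INR (cell x) <= x * INR M' <= INR (cell x) + 1).
  { intros x Hx. unfold cell. apply epsilon_spec. apply cell_exists; auto. split; nra. }
  set (code := fun tau => (fst (sel tau) + Kf * enc M' (fun c => cell (snd (sel tau) c)) Dp)%nat).
  assert (Hcode : forall tau, (code tau < Kf * M' ^ Dp)%nat).
  { intros tau. unfold code. destruct (Hsel tau) as [H1 [H2 _]].
    assert (enc M' (fun c => cell (snd (sel tau) c)) Dp < M' ^ Dp)%nat.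
    { apply enc_lt. intros c Hc. apply Hcell. apply H2; auto. }
    nia. }
  assert (Hinj : forall tau tau', (tau < b ^ E)%nat -> (tau' < b ^ E)%nat -> code tau = code tau' -> tau = tau').
  { intros tau tau' Ht Ht' Hc.
    destruct (Hsel tau) as [Hl1 [Hb1 HF1]]. destruct (Hsel tau') as [Hl2 [Hb2 HF2]].
    unfold code in Hc. rewrite !(Nat.mul_comm Kf), (Nat.add_comm (fst (sel tau))), (Nat.add_comm (fst (sel tau'))) in Hc.
    apply lin_uniq in Hc; auto. destruct Hc as [Henc Hl].
    assert (Hcb : forall c, (c < Dp)%nat -> (cell (snd (sel tau) c) < M')%nat /\ (cell (snd (sel tau') c) < M')%nat).
    { intros c Hc; split; apply Hcell; auto. }
    pose proof (enc_inj M' Dp _ _ Hcb Henc) as Henc2. clear Henc. rename Henc2 into Henc.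
    assert (Hd : distn Dp (snd (sel tau)) (snd (sel tau')) <= 1 / INR M').
    { apply distn_le; [left; apply Rdiv_lt_0_compat; lra|]. intros c Hc.
      destruct (Hcell _ (Hb1 c Hc)) as [_ Hc1]. destruct (Hcell _ (Hb2 c Hc)) as [_ Hc2].
      rewrite (Henc c Hc) in Hc1.
      apply (Rmult_le_reg_r (INR M')); auto. unfold Rdiv. rewrite Rmult_1_l, Rinv_l by lra.
      rewrite <- (Rabs_pos_eq (INR M')) at 1 by lra. rewrite <- Rabs_mult.
      apply Rabs_le. split; nra. }
    apply (digits_inj b E); auto; [unfold b; lia|].
    intros c Hc. apply INR_close.
    destruct (HLc (fst (sel tau)) Hl1) as [_ HL].
    specialize (HL c Hc _ _ Hb1 Hb2). rewrite HF1 in HL by auto. rewrite Hl in HL. rewrite HF2 in HL by auto.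
    unfold wg in HL.
    replace (eta * INR (digit b tau c) / INR M - eta * INR (digit b tau' c) / INR M)
      with ((eta / INR M) * (INR (digit b tau c) - INR (digit b tau' c))) in HL by (field; lra).
    rewrite Rabs_mult, (Rabs_pos_eq (eta / INR M)) in HL by (left; apply Rdiv_lt_0_compat; lra).
    assert (Lc * distn Dp (snd (sel tau)) (snd (sel tau')) <= Lc * (1 / INR M')) by (apply Rmult_le_compat_l; auto).
    assert (Lc * (1 / INR M') < eta / INR M).
    { unfold M'. rewrite mult_INR. unfold Rdiv.
      apply (Rmult_lt_reg_r (INR alpha * INR M)). { apply Rmult_lt_0_compat; auto. apply lt_0_INR; unfold alpha; lia. }
      replace (Lc * (1 * / (INR alpha * INR M)) * (INR alpha * INR M)) with Lc
        by (field; split; [lra|apply not_0_INR; unfold alpha; lia]).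
      replace (eta * / INR M * (INR alpha * INR M)) with (eta * INR alpha) by (field; lra). lra. }
    apply (Rmult_lt_reg_l (eta / INR M)); [apply Rdiv_lt_0_compat; lra|]. lra. }
  (* pigeonhole *)
  assert (Hlen : (b ^ E <= Kf * M' ^ Dp)%nat).
  { assert (Hn : (length (map code (seq 0 (b ^ E))) <= length (seq 0 (Kf * M' ^ Dp)))%nat).
    2: { rewrite length_map, !length_seq in Hn. exact Hn. }
    apply NoDup_incl_length.
    - apply NoDup_map_NoDup_ForallPairs; [|apply seq_NoDup].
      intros x y Hx Hy Hxy. apply in_seq in Hx; apply in_seq in Hy. apply Hinj; auto; lia.
    - intros z Hz. apply in_map_iff in Hz. destruct Hz as [tau [<- _]]. apply in_seq. split; [lia|].
      simpl. apply Hcode. }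
  assert (H1 : (Kf * M' ^ Dp < M ^ S Dp)%nat).
  { unfold M'. rewrite Nat.pow_mul_l. simpl. assert (0 < M ^ Dp)%nat by (apply Nat.neq_0_lt_0, Nat.pow_nonzero; lia).
    assert (HMd : M = (Kf * alpha ^ Dp + 1)%nat) by reflexivity.
    set (X := (alpha ^ Dp)%nat) in *. set (Y := (M ^ Dp)%nat) in *. clearbody X Y.
    rewrite HMd at 1. nia. }
  assert (H2 : (M ^ S Dp <= M ^ E)%nat) by (apply Nat.pow_le_mono_r; lia).
  assert (H3 : (M ^ E < b ^ E)%nat) by (apply Nat.pow_lt_mono_l; unfold b; lia).
  lia.
Qed.

Lemma core K d m n (nf : nat) (Y : nat -> (nat -> R) -> nat -> R) (Bc Tt : nat -> (nat -> R) -> R) (beta eta : R) :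
  (1 <= n)%nat -> (n <= d)%nat -> (4 <= dK K * m * n)%nat -> 0 < beta -> 0 < eta ->
  (forall l i, (l < nf)%nat -> (i < dK K * d * m)%nat -> BL 3 (box 3) (fun p => Y l p i)) ->
  (forall l, (l < nf)%nat -> BL 3 (box 3) (Bc l)) ->
  (forall l p, (l < nf)%nat -> box 3 p -> beta <= Bc l p) ->
  (forall l, (l < nf)%nat -> BL 3 (box 3) (Tt l)) ->
  exists w, (forall e, (e < 4)%nat -> 0 <= w e <= eta) /\
    forall l p, (l < nf)%nat -> box 3 p ->
      ~ Z K d m n (fun i => Y l p i + Bc l p * Ew K d n w i) (Tt l p).
Proof.
  intros Hn Hnd H4 Hb He HY HB HBb HT.
  destruct (count_avoid 3 4 nf (fun l p e => Gx K d n (Y l p) (Tt l p) e * / Bc l p) eta) as [w [Hw1 Hw2]]; auto.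
  { intros l c Hl Hc. apply BL_mul.
    - apply BL_Gx with (m := m); auto. apply je_lt; auto.
    - apply (BL_inv _ _ _ beta); auto. }
  exists w. split; auto. intros l p Hl Hp HZ.
  destruct (Hw2 l p Hl Hp) as [e [He4 Hne]]. apply Hne.
  assert (E : (fun i => Y l p i + Bc l p * Ew K d n w i) = (fun i => Y l p i + Ew K d n (fun e => Bc l p * w e) i)).
  { apply functional_extensionality. intros i. rewrite Ew_scale. auto. }
  rewrite E in HZ. pose proof (extract K d m n (Y l p) _ (Tt l p) Hn Hnd H4 HZ e He4) as Hx.
  simpl in Hx. rewrite <- Hx. pose proof (HBb l p Hl Hp). field. lra.
Qed.

Definition bnd (N : nat) (R0 : R) (y : nat -> R) : Prop := forall i, (i < N)%nat -> Rabs (y i) <= R0.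

Lemma L_ext K d m y y' j : (j < m)%nat -> (forall i, (i < dK K * d * m)%nat -> y i = y' i) ->
  L K d y j = L K d y' j.
Proof.
  intros Hj H. unfold L. f_equal. apply map_ext_in. intros i Hi. apply in_seq in Hi.
  destruct K; unfold coef; simpl in *; f_equal; apply H; nia.
Qed.

Lemma Nphi_ext K d m n y y' t : (forall i, (i < dK K * d * m)%nat -> y i = y' i) ->
  Nphi K d m n y t = Nphi K d m n y' t.
Proof. intros H. unfold Nphi. apply esum_ext. intros j Hj. rewrite (L_ext K d m y y' j); auto. Qed.

Lemma Z_ext K d m n y y' t : (forall i, (i < dK K * d * m)%nat -> y i = y' i) ->
  Z K d m n y t -> Z K d m n y' t.
Proof. intros H HZ j Hj. rewrite <- (L_ext K d m y y' j); auto. Qed.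

Lemma Q_ext K d m n y y' : (forall i, (i < dK K * d * m)%nat -> y i = y' i) ->
  Qspace K d m n y -> Qspace K d m n y'.
Proof.
  intros H HQ. apply Q_iff. intros t HZ. pose proof (proj1 (Q_iff K d m n y) HQ t) as HQ'. apply HQ'.
  apply (Z_ext K d m n y' y); auto. intros; symmetry; auto.
Qed.

Lemma distn_ext D p q p' q' : (forall i, (i < D)%nat -> p i = p' i /\ q i = q' i) ->
  distn D p q = distn D p' q'.
Proof. induction D; intros H; simpl; auto. destruct (H D ltac:(lia)) as [-> ->]. rewrite IHD; auto. Qed.

Definition ext (N : nat) (y : nat -> R) (t : R) : nat -> R := fun i => if Nat.ltb i N then y i else t.

Lemma Nphi_lip K d m n R0 T : exists Lp, 0 <= Lp /\ forall y y' t t',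
  bnd (dK K * d * m) R0 y -> bnd (dK K * d * m) R0 y' -> Rabs t <= T -> Rabs t' <= T ->
  Rabs (Nphi K d m n y t - Nphi K d m n y' t') <= Lp * Rmax (Rabs (t - t')) (distn (dK K * d * m) y y').
Proof.
  set (N := (dK K * d * m)%nat).
  set (Sx := fun p : nat -> R => (forall i, (i < N)%nat -> Rabs (p i) <= R0) /\ Rabs (p N) <= T).
  destruct (BL_Nphi (S N) Sx K d m n (fun p => p) (fun p => p N)) as [M [Lp [_ [HLp [_ H]]]]].
  - intros i Hi. apply (BL_proj _ _ _ R0); [lia|]. intros p [Hp _]; auto.
  - apply (BL_proj _ _ _ T); [lia|]. intros p [_ Hp]; auto.
  - exists Lp. split; auto. intros y y' t t' Hy Hy' Ht Ht'.
    specialize (H (ext N y t) (ext N y' t')).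
    assert (E1 : forall y t, Nphi K d m n (ext N y t) (ext N y t N) = Nphi K d m n y t).
    { intros. unfold ext at 2. rewrite Nat.ltb_irrefl. apply Nphi_ext. intros i Hi. unfold ext.
      apply Nat.ltb_lt in Hi. fold N in Hi. rewrite Hi. auto. }
    rewrite !E1 in H.
    assert (Hd : distn (S N) (ext N y t) (ext N y' t') = Rmax (Rabs (t - t')) (distn N y y')).
    { simpl. unfold ext at 1 2. rewrite Nat.ltb_irrefl.
      rewrite (distn_ext N _ _ y y'); [reflexivity|].
      intros i Hi. unfold ext. apply Nat.ltb_lt in Hi. rewrite Hi. auto. }
    rewrite Hd in H. apply H.
    + unfold Sx; split; [intros i Hi; unfold ext; pose proof Hi as Hi'; apply Nat.ltb_lt in Hi; rewrite Hi; apply Hy; auto|]. unfold ext; destruct (Nat.ltb_spec N N); [lia|auto].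
    + unfold Sx; split; [intros i Hi; unfold ext; pose proof Hi as Hi'; apply Nat.ltb_lt in Hi; rewrite Hi; apply Hy'; auto|]. unfold ext; destruct (Nat.ltb_spec N N); [lia|auto].
Qed.

Lemma Rabs_le_inv a b : Rabs a <= b -> - b <= a <= b.
Proof. intros H. pose proof (Rle_abs a); pose proof (Rle_abs (-a)); rewrite Rabs_Ropp in *; lra. Qed.

Lemma lip_small Lp eps : 0 <= Lp -> 0 < eps -> Lp * (eps / (Lp + 1)) < eps.
Proof.
  intros H1 H2. apply (Rmult_lt_reg_r (Lp + 1)); [lra|].
  replace (Lp * (eps / (Lp + 1)) * (Lp + 1)) with (Lp * eps) by (field; lra). nra.
Qed.

Lemma cont_pt_eps (f : R -> R) x0 :
  (forall eps, 0 < eps -> exists delta, 0 < delta /\ forall x, Rabs (x - x0) < delta -> Rabs (f x - f x0) < eps) ->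
  continuity_pt f x0.
Proof.
  intros H eps Heps. destruct (H eps Heps) as [delta [Hd H']]. exists delta. split; auto.
  intros x [_ Hx]. simpl in *. unfold R_dist in *. auto.
Qed.

Definition clamp (a b x : R) : R := Rmax a (Rmin b x).

Lemma clamp_in a b x : a <= b -> a <= clamp a b x <= b.
Proof. intros H. unfold clamp. split; [apply Rmax_l|]. apply Rmax_lub; auto. apply Rmin_l. Qed.

Lemma clamp_id a b x : a <= x <= b -> clamp a b x = x.
Proof. intros H. unfold clamp. rewrite Rmin_right by lra. rewrite Rmax_right; lra. Qed.

Lemma clamp_lip a b x y : a <= b -> Rabs (clamp a b x - clamp a b y) <= Rabs (x - y).
Proof.
  intros H. unfold clamp, Rmin, Rmax.
  repeat (destruct (Rle_dec _ _)); apply Rabs_le; split;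
  try (pose proof (Rle_abs (x - y)); pose proof (Rle_abs (- (x - y))); rewrite Rabs_Ropp in *; lra).
Qed.

Lemma margin_path K d m n (R0 : R) (p : R -> nat -> R) :
  (1 <= m)%nat -> (1 <= n)%nat -> 0 <= R0 ->
  cont_path (dK K * d * m) p -> (forall s, in01 s -> bnd (dK K * d * m) R0 (p s)) ->
  (forall s, in01 s -> forall t, ~ Z K d m n (p s) t) ->
  exists r, 0 < r /\ forall s, in01 s -> forall t, Rabs t <= R0 + 1 -> r <= Nphi K d m n (p s) t.
Proof.
  intros Hm Hn HR Hc Hb HQ.
  set (N := (dK K * d * m)%nat). fold N in Hc, Hb.
  set (T := R0 + 1).
  destruct (Nphi_lip K d m n R0 T) as [Lp [HLp Hlip]]. fold N in Hlip.
  assert (Hmin : forall y, bnd N R0 y -> exists t0, Rabs t0 <= T /\ forall t, Rabs t <= T -> Nphi K d m n y t0 <= Nphi K d m n y t).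
  { intros y Hy. destruct (continuity_ab_min (fun t => Nphi K d m n y (clamp (-T) T t)) (-T) T) as [t0 [H1 H2]].
    - unfold T; lra.
    - intros c _. apply cont_pt_eps. intros eps Heps. exists (eps / (Lp + 1)). split; [apply Rdiv_lt_0_compat; lra|].
      intros x Hx. eapply Rle_lt_trans; [apply Hlip; auto; apply Rabs_le; apply clamp_in; unfold T; lra|].

      assert (distn N y y = 0). { apply Rle_antisym; [apply distn_le; [lra|]; intros; unfold Rminus; rewrite Rplus_opp_r, Rabs_R0; lra|apply distn_nonneg]. }
      rewrite H. rewrite Rmax_left by apply Rabs_pos.
      pose proof (clamp_lip (-T) T x c ltac:(unfold T; lra)).
      apply (Rle_lt_trans _ (Lp * (eps / (Lp + 1)))).
      + apply Rmult_le_compat_l; auto. lra.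
      + apply lip_small; auto.
    - exists t0. split; [apply Rabs_le; auto|]. intros t Ht.
      assert (Ht2 : -T <= t <= T) by (pose proof (Rle_abs t); pose proof (Rle_abs (-t)); rewrite Rabs_Ropp in *; lra).
      specialize (H1 t Ht2). rewrite !clamp_id in H1 by lra. auto. }
  set (tmin := fun y => epsilon (inhabits 0) (fun t0 => Rabs t0 <= T /\ forall t, Rabs t <= T -> Nphi K d m n y t0 <= Nphi K d m n y t)).
  assert (Htmin : forall y, bnd N R0 y -> Rabs (tmin y) <= T /\ forall t, Rabs t <= T -> Nphi K d m n y (tmin y) <= Nphi K d m n y t).
  { intros y Hy. unfold tmin. apply epsilon_spec. auto. }
  set (rho := fun y => Nphi K d m n y (tmin y)).
  assert (Hrho : forall y y', bnd N R0 y -> bnd N R0 y' -> rho y <= rho y' + Lp * distn N y y').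
  { intros y y' Hy Hy'. unfold rho. destruct (Htmin y Hy) as [_ H1]. destruct (Htmin y' Hy') as [H2 _].
    specialize (H1 (tmin y') H2). specialize (Hlip y y' (tmin y') (tmin y') Hy Hy' H2 H2).
    unfold Rminus in Hlip. rewrite Rplus_opp_r, Rabs_R0, Rmax_right in Hlip by apply distn_nonneg.
    apply Rabs_le_inv in Hlip. lra. }
  set (cl := clamp 0 1).
  assert (Hcl : forall s, in01 s -> cl s = s) by (intros; unfold cl; apply clamp_id; auto).
  assert (Hcl01 : forall s, in01 s -> in01 (cl s)) by (intros; unfold cl, in01; apply clamp_in; lra).
  assert (Hcl01' : forall s, in01 (cl s)) by (intros; unfold cl, in01; apply clamp_in; lra).
  set (sigma := fun s => rho (p (cl s))).
  destruct (continuity_ab_min sigma 0 1) as [s0 [Hs2 Hs1]]; [lra| |].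
  { intros c _. apply cont_pt_eps. intros eps Heps.
    destruct (Hc (cl c) (Hcl01' c) (eps / (Lp + 1))) as [delta [Hd Hd']]; [apply Rdiv_lt_0_compat; lra|].
    exists delta. split; auto. intros x Hx.
    assert (Hdist : distn N (p (cl x)) (p (cl c)) <= eps / (Lp + 1)).
    { apply distn_le; [left; apply Rdiv_lt_0_compat; lra|]. intros i Hi. left. apply Hd'; auto.
      eapply Rle_lt_trans; [apply clamp_lip; lra|auto]. }
    unfold sigma.
    pose proof (Hrho (p (cl x)) (p (cl c)) (Hb _ (Hcl01' x)) (Hb _ (Hcl01' c))).
    pose proof (Hrho (p (cl c)) (p (cl x)) (Hb _ (Hcl01' c)) (Hb _ (Hcl01' x))).
    assert (Hsym : distn N (p (cl c)) (p (cl x)) = distn N (p (cl x)) (p (cl c))).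
    { clear. induction N; simpl; auto. rewrite IHN. f_equal. rewrite <- Rabs_Ropp. f_equal. ring. }
    rewrite Hsym in H0.
    assert (Lp * distn N (p (cl x)) (p (cl c)) < eps).
    { apply (Rle_lt_trans _ (Lp * (eps / (Lp + 1)))); [apply Rmult_le_compat_l; auto|].
      apply lip_small; auto. }
    apply Rabs_def1; lra. }
  exists (sigma s0). split.
  - unfold sigma, rho. apply Nphi_pos. apply HQ. apply Hcl01'.
  - intros s Hs t Ht. specialize (Hs2 s Hs). unfold sigma in Hs2. rewrite (Hcl s) in Hs2 by auto.
    eapply Rle_trans; [apply Hs2|]. unfold rho. apply Htmin; auto.
Qed.

Lemma esum_abs k f c : (forall e, (e < k)%nat -> Rabs (f e) <= c) -> Rabs (esum k f) <= INR k * c.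
Proof.
  induction k; intros H; cbn [esum]. simpl. rewrite Rabs_R0; lra.
  eapply Rle_trans; [apply Rabs_triang|]. rewrite S_INR.
  pose proof (IHk ltac:(intros; apply H; lia)). pose proof (H k ltac:(lia)). lra.
Qed.

Lemma Ew_bound K d n w i eta : (forall e, (e < 4)%nat -> 0 <= w e <= eta) -> Rabs (Ew K d n w i) <= 4 * eta.
Proof.
  intros H. unfold Ew. replace 4 with (INR 4) by (simpl; lra). apply esum_abs.
  intros e He. destruct (Nat.eqb i (idx K d n e)); [rewrite Rabs_pos_eq; apply H; auto|].
  rewrite Rabs_R0. pose proof (H e He); lra.
Qed.

Lemma cont_path_lin N (A B : nat -> R) Bb : (forall i, (i < N)%nat -> Rabs (B i) <= Bb) ->
  cont_path N (fun s i => A i + s * B i).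
Proof.
  intros HB s0 _ eps Heps. exists (eps / (Rabs Bb + 1)). split; [apply Rdiv_lt_0_compat; [lra|pose proof (Rabs_pos Bb); lra]|].
  intros s _ Hs i Hi. replace (A i + s * B i - (A i + s0 * B i)) with ((s - s0) * B i) by ring.
  rewrite Rabs_mult. specialize (HB i Hi). pose proof (Rabs_pos (B i)). pose proof (Rle_abs Bb).
  pose proof (Rabs_pos (s - s0)).
  apply (Rle_lt_trans _ (Rabs (s - s0) * (Rabs Bb + 1))); [apply Rmult_le_compat_l; lra|].
  apply (Rmult_lt_reg_r (/ (Rabs Bb + 1))); [apply Rinv_0_lt_compat; pose proof (Rabs_pos Bb); lra|].
  rewrite Rmult_assoc, Rinv_r, Rmult_1_r by (pose proof (Rabs_pos Bb); lra). auto.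
Qed.

Definition mk3 (a b c : R) : nat -> R := fun i => match i with 0%nat => a | 1%nat => b | _ => c end.

Lemma box3_mk a b c : 0 <= a <= 1 -> 0 <= b <= 1 -> 0 <= c <= 1 -> box 3 (mk3 a b c).
Proof. intros Ha Hb Hc i Hi. destruct i as [|[|[|]]]; simpl; auto; lia. Qed.

Lemma BL_box3 i : (i < 3)%nat -> BL 3 (box 3) (fun p => p i).
Proof. intros Hi. apply (BL_proj _ _ _ 1); auto. intros p Hp. specialize (Hp i Hi). rewrite Rabs_pos_eq; lra. Qed.

Lemma tri K d m n (nf : nat) (X V : nat -> nat -> R) (G : nat -> R) (R0 eta : R) :
  (1 <= m)%nat -> (1 <= n)%nat -> (n <= d)%nat -> (4 <= dK K * m * n)%nat -> 0 <= R0 -> 0 < eta <= 1 ->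
  (forall l, (l < nf)%nat -> bnd (dK K * d * m) R0 (X l) /\ bnd (dK K * d * m) R0 (V l)) ->
  bnd (dK K * d * m) R0 G ->
  (forall l a, (l < nf)%nat -> 0 <= a <= 1 -> forall t, ~ Z K d m n (fun i => X l i + a * (V l i - X l i)) t) ->
  exists w, (forall e, (e < 4)%nat -> 0 <= w e <= eta) /\
    forall l a b, (l < nf)%nat -> 0 <= a -> 0 <= b -> a + b <= 1 -> forall t,
      ~ Z K d m n (fun i => X l i + a * (V l i - X l i) + b * (G i + Ew K d n w i - X l i)) t.
Proof.
  intros Hm Hn Hnd H4 HR0 Heta HXV HG Hedge.
  set (N := (dK K * d * m)%nat). fold N in HXV, HG.
  set (R1 := R0 + 4). set (T := R1 + 1).
  destruct (fin_min nf (fun l r => forall a, 0 <= a <= 1 -> forall t, Rabs t <= R1 + 1 ->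
               r <= Nphi K d m n (fun i => X l i + a * (V l i - X l i)) t)) as [r [Hr Hmarg]].
  { intros i a b H [Hb Hba] a0 Ha0 t Ht. specialize (H a0 Ha0 t Ht). lra. }
  { intros l Hl. destruct (HXV l Hl) as [HX HV].
    destruct (margin_path K d m n R1 (fun s i => X l i + s * (V l i - X l i))) as [r [Hr H]]; auto.
    - unfold R1; lra.
    - apply (cont_path_lin _ _ _ (2 * R0)). intros i Hi. fold N in Hi.
      eapply Rle_trans; [apply Rabs_triang|]. rewrite Rabs_Ropp. specialize (HX i Hi); specialize (HV i Hi). lra.
    - intros s Hs i Hi. fold N in Hi. specialize (HX i Hi); specialize (HV i Hi).
      replace (X l i + s * (V l i - X l i)) with ((1 - s) * X l i + s * V l i) by ring.
      destruct Hs. eapply Rle_trans; [apply Rabs_triang|]. rewrite !Rabs_mult, (Rabs_pos_eq (1 - s)), (Rabs_pos_eq s) by lra.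
      assert ((1 - s) * Rabs (X l i) <= (1 - s) * R0) by (apply Rmult_le_compat_l; lra).
      assert (s * Rabs (V l i) <= s * R0) by (apply Rmult_le_compat_l; lra).
      unfold R1. nra.
    - exists r. split; auto. }
  destruct (Nphi_lip K d m n R1 T) as [Lp [HLp Hlip]]. fold N in Hlip.
  set (beta := Rmin (1/2) (r / (2 * (Lp + 1) * (2 * R1 + 1)))).
  assert (Hbeta0 : 0 < beta).
  { unfold beta. apply Rmin_glb_lt; [lra|]. apply Rdiv_lt_0_compat; auto. unfold R1. nra. }
  assert (Hbeta1 : beta <= 1/2) by apply Rmin_l.
  assert (Hbeta2 : beta * (2 * (Lp + 1) * (2 * R1 + 1)) <= r).
  { assert (beta <= r / (2 * (Lp + 1) * (2 * R1 + 1))) by apply Rmin_r.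
    apply (Rmult_le_compat_r (2 * (Lp + 1) * (2 * R1 + 1))) in H; [|unfold R1; nra].
    replace (r / (2 * (Lp + 1) * (2 * R1 + 1)) * (2 * (Lp + 1) * (2 * R1 + 1))) with r in H by (field; unfold R1; nra).
    auto. }
  set (Tt := fun (_ : nat) (p : nat -> R) => T * (2 * p 2%nat - 1)).
  set (Bc := fun (_ : nat) (p : nat -> R) => beta + (1 - beta) * p 1%nat).
  set (Y := fun l (p : nat -> R) i => X l i + p 0%nat * (V l i - X l i) + Bc l p * (G i - X l i)).
  destruct (core K d m n nf Y Bc Tt beta eta) as [w [Hw Hcore]]; auto; try lra.
  { intros l i Hl Hi. destruct (HXV l Hl) as [HX HV]. unfold Y, Bc.
    repeat first [apply BL_add | apply BL_mul | apply BL_sub | apply BL_const | apply BL_box3; lia]. }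
  { intros l Hl. unfold Bc. repeat first [apply BL_add | apply BL_mul | apply BL_sub | apply BL_const | apply BL_box3; lia]. }
  { intros l p Hl Hp. unfold Bc. specialize (Hp 1%nat ltac:(lia)). nra. }
  { intros l Hl. unfold Tt. repeat first [apply BL_add | apply BL_mul | apply BL_sub | apply BL_const | apply BL_box3; lia]. }
  exists w. split; auto.
  intros l a b Hl Ha Hb Hab t HZ.
  destruct (HXV l Hl) as [HX HV].
  set (P := fun i => X l i + a * (V l i - X l i) + b * (G i + Ew K d n w i - X l i)) in HZ.
  assert (HPb : bnd N R1 P).
  { intros i Hi. unfold P. specialize (HX i Hi); specialize (HV i Hi); specialize (HG i Hi).
    pose proof (Ew_bound K d n w i eta Hw).
    replace (X l i + a * (V l i - X l i) + b * (G i + Ew K d n w i - X l i)) with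
      ((1 - a - b) * X l i + a * V l i + b * G i + b * Ew K d n w i) by ring.
    pose proof (Rabs_triang ((1 - a - b) * X l i + a * V l i + b * G i) (b * Ew K d n w i)).
    pose proof (Rabs_triang ((1 - a - b) * X l i + a * V l i) (b * G i)).
    pose proof (Rabs_triang ((1 - a - b) * X l i) (a * V l i)).
    rewrite !Rabs_mult, !(Rabs_pos_eq a), !(Rabs_pos_eq b), (Rabs_pos_eq (1 - a - b)) in * by lra.
    assert (b * Rabs (Ew K d n w i) <= b * 4) by (apply Rmult_le_compat_l; lra).
    assert ((1 - a - b) * Rabs (X l i) <= (1 - a - b) * R0) by (apply Rmult_le_compat_l; lra).
    assert (a * Rabs (V l i) <= a * R0) by (apply Rmult_le_compat_l; lra).
    assert (b * Rabs (G i) <= b * R0) by (apply Rmult_le_compat_l; lra).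
    unfold R1. nra. }
  destruct (Rle_dec (Rabs t) T) as [Ht|Ht].
  2: { apply (rootbound K d m n P t R1); auto; [unfold T in Ht; lra]. }
  destruct (Rlt_dec b beta) as [Hbb|Hbb].
  - (* near the edge *)
    assert (HE := Hmarg l Hl a ltac:(lra) t Ht).
    set (Ea := fun i => X l i + a * (V l i - X l i)) in HE.
    assert (HEb : bnd N R1 Ea).
    { intros i Hi. unfold Ea. specialize (HX i Hi); specialize (HV i Hi).
      replace (X l i + a * (V l i - X l i)) with ((1 - a) * X l i + a * V l i) by ring.
      eapply Rle_trans; [apply Rabs_triang|]. rewrite !Rabs_mult, (Rabs_pos_eq (1 - a)), (Rabs_pos_eq a) by lra.
      assert ((1 - a) * Rabs (X l i) <= (1 - a) * R0) by (apply Rmult_le_compat_l; lra).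
      assert (a * Rabs (V l i) <= a * R0) by (apply Rmult_le_compat_l; lra).
      unfold R1. nra. }
    assert (Hd : distn N P Ea <= b * (2 * R1)).
    { apply distn_le; [unfold R1; nra|]. intros i Hi. unfold P, Ea.
      specialize (HX i Hi); specialize (HG i Hi). pose proof (Ew_bound K d n w i eta Hw).
      replace (X l i + a * (V l i - X l i) + b * (G i + Ew K d n w i - X l i) - (X l i + a * (V l i - X l i)))
        with (b * (G i + Ew K d n w i - X l i)) by ring.
      rewrite Rabs_mult, Rabs_pos_eq by lra. apply Rmult_le_compat_l; [lra|].
      pose proof (Rabs_triang (G i + Ew K d n w i) (- X l i)). pose proof (Rabs_triang (G i) (Ew K d n w i)).
      rewrite Rabs_Ropp in *. unfold Rminus. unfold R1. lra. }
    specialize (Hlip P Ea t t HPb HEb Ht Ht). unfold Rminus in Hlip at 2. rewrite Rplus_opp_r, Rabs_R0, Rmax_right in Hlip by apply distn_nonneg.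
    apply Rabs_le_inv in Hlip.
    assert (Lp * distn N P Ea <= r / 2).
    { apply (Rle_trans _ (Lp * (b * (2 * R1)))); [apply Rmult_le_compat_l; auto|].
      assert (b * (2 * R1) <= beta * (2 * R1 + 1)) by (unfold R1 in *; nra).
      apply (Rle_trans _ ((Lp + 1) * (beta * (2 * R1 + 1)))); [|nra].
      apply Rmult_le_compat; unfold R1 in *; nra. }
    apply (Nphi_noZ K d m n P t); [lra|auto].
  - (* generic part *)
    set (pp := mk3 a ((b - beta) / (1 - beta)) ((t / T + 1) / 2)).
    assert (Hpp : box 3 pp).
    { apply Rabs_le_inv in Ht. apply box3_mk; [lra| |].
      - split; [unfold Rdiv; apply Rmult_le_pos; [lra|left; apply Rinv_0_lt_compat; lra]|]. apply (Rmult_le_reg_r (1 - beta)); [lra|].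
        unfold Rdiv. rewrite Rmult_assoc, Rinv_l, Rmult_1_r by lra. lra.
      - assert (0 < T) by (unfold T, R1; lra).
        assert (-1 <= t / T <= 1).
        { split; apply (Rmult_le_reg_r T); auto; unfold Rdiv; rewrite Rmult_assoc, Rinv_l, Rmult_1_r by lra; lra. }
        lra. }
    assert (Ett : Tt l pp = t) by (unfold Tt, pp, mk3; field; unfold T, R1; lra).
    pose proof (Hcore l pp Hl Hpp) as Hc. rewrite Ett in Hc. apply Hc. revert HZ. apply Z_ext. intros i Hi.
    unfold P, Y, Bc, Tt, pp, mk3. simpl.
    replace (beta + (1 - beta) * ((b - beta) / (1 - beta))) with b by (field; lra). ring.
Qed.

Definition c2 (f : R -> R -> R) : Prop :=
  forall s0 u0, in01 s0 -> in01 u0 -> forall eps, eps > 0 -> exists delta, delta > 0 /\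
    forall s u, in01 s -> in01 u -> Rabs (s - s0) < delta -> Rabs (u - u0) < delta ->
      Rabs (f s u - f s0 u0) < eps.

Lemma c2_const c : c2 (fun _ _ => c).
Proof. intros s0 u0 _ _ eps He. exists 1. split; [lra|]. intros. unfold Rminus; rewrite Rplus_opp_r, Rabs_R0; lra. Qed.

Lemma c2_add f g : c2 f -> c2 g -> c2 (fun s u => f s u + g s u).
Proof.
  intros Hf Hg s0 u0 Hs Hu eps He.
  destruct (Hf s0 u0 Hs Hu (eps/2)) as [d1 [Hd1 H1]]; [lra|].
  destruct (Hg s0 u0 Hs Hu (eps/2)) as [d2 [Hd2 H2]]; [lra|].
  exists (Rmin d1 d2). split; [apply Rmin_glb_lt; auto|]. intros s u Hs' Hu' Hss Huu.
  assert (Hs1 : Rabs (s - s0) < d1) by (eapply Rlt_le_trans; [apply Hss|apply Rmin_l]).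
  assert (Hs2 : Rabs (s - s0) < d2) by (eapply Rlt_le_trans; [apply Hss|apply Rmin_r]).
  assert (Hu1 : Rabs (u - u0) < d1) by (eapply Rlt_le_trans; [apply Huu|apply Rmin_l]).
  assert (Hu2 : Rabs (u - u0) < d2) by (eapply Rlt_le_trans; [apply Huu|apply Rmin_r]).
  specialize (H1 s u Hs' Hu' Hs1 Hu1). specialize (H2 s u Hs' Hu' Hs2 Hu2).
  replace (f s u + g s u - (f s0 u0 + g s0 u0)) with ((f s u - f s0 u0) + (g s u - g s0 u0)) by ring.
  eapply Rle_lt_trans; [apply Rabs_triang|]. lra.
Qed.

Lemma c2_mul f g : c2 f -> c2 g -> c2 (fun s u => f s u * g s u).
Proof.
  intros Hf Hg s0 u0 Hs Hu eps He.
  set (A := Rabs (f s0 u0) + 1). set (B := Rabs (g s0 u0) + 1).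
  assert (HA : 0 < A) by (unfold A; pose proof (Rabs_pos (f s0 u0)); lra).
  assert (HB : 0 < B) by (unfold B; pose proof (Rabs_pos (g s0 u0)); lra).
  destruct (Hf s0 u0 Hs Hu (eps / (2 * B))) as [d1 [Hd1 H1]]; [apply Rdiv_lt_0_compat; lra|].
  destruct (Hg s0 u0 Hs Hu (Rmin 1 (eps / (2 * A)))) as [d2 [Hd2 H2]].
  { apply Rmin_glb_lt; [lra|]. apply Rdiv_lt_0_compat; lra. }
  exists (Rmin d1 d2). split; [apply Rmin_glb_lt; auto|]. intros s u Hs' Hu' Hss Huu.
  assert (Hs1 : Rabs (s - s0) < d1) by (eapply Rlt_le_trans; [apply Hss|apply Rmin_l]).
  assert (Hs2 : Rabs (s - s0) < d2) by (eapply Rlt_le_trans; [apply Hss|apply Rmin_r]).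
  assert (Hu1 : Rabs (u - u0) < d1) by (eapply Rlt_le_trans; [apply Huu|apply Rmin_l]).
  assert (Hu2 : Rabs (u - u0) < d2) by (eapply Rlt_le_trans; [apply Huu|apply Rmin_r]).
  specialize (H1 s u Hs' Hu' Hs1 Hu1). specialize (H2 s u Hs' Hu' Hs2 Hu2).
  assert (Hg1 : Rabs (g s u - g s0 u0) < 1) by (eapply Rlt_le_trans; [apply H2|apply Rmin_l]).
  assert (Hg2 : Rabs (g s u - g s0 u0) < eps / (2 * A)) by (eapply Rlt_le_trans; [apply H2|apply Rmin_r]).
  replace (f s u * g s u - f s0 u0 * g s0 u0) with ((f s u - f s0 u0) * g s u + f s0 u0 * (g s u - g s0 u0)) by ring.
  eapply Rle_lt_trans; [apply Rabs_triang|]. rewrite !Rabs_mult.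
  assert (Hgb : Rabs (g s u) <= B).
  { unfold B. replace (g s u) with (g s0 u0 + (g s u - g s0 u0)) by ring.
    eapply Rle_trans; [apply Rabs_triang|]. lra. }
  assert (Hfb : Rabs (f s0 u0) <= A) by (unfold A; lra).
  assert (H4 : Rabs (f s u - f s0 u0) * Rabs (g s u) <= eps / (2 * B) * B).
  { apply Rmult_le_compat; auto using Rabs_pos; lra. }
  assert (H5 : Rabs (f s0 u0) * Rabs (g s u - g s0 u0) <= A * (eps / (2 * A))).
  { apply Rmult_le_compat; auto using Rabs_pos; lra. }
  assert (H6 : Rabs (f s u - f s0 u0) * Rabs (g s u) < eps / 2 \/ Rabs (f s0 u0) * Rabs (g s u - g s0 u0) < eps / 2).
  { destruct (Req_dec (Rabs (g s u)) 0) as [E|E].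
    - left. rewrite E, Rmult_0_r. lra.
    - left. pose proof (Rabs_pos (g s u)).
      apply (Rlt_le_trans _ (eps / (2 * B) * Rabs (g s u))).
      + apply Rmult_lt_compat_r; [lra|auto].
      + apply (Rle_trans _ (eps / (2 * B) * B)); [apply Rmult_le_compat_l; [left; apply Rdiv_lt_0_compat; lra|auto]|].
        right. field. lra. }
  replace (eps / (2 * B) * B) with (eps / 2) in H4 by (field; lra).
  replace (A * (eps / (2 * A))) with (eps / 2) in H5 by (field; lra).
  destruct H6; [lra|].
  assert (Rabs (f s u - f s0 u0) * Rabs (g s u) <= eps / 2) by lra. lra.
Qed.

Lemma c2_opp f : c2 f -> c2 (fun s u => - f s u).
Proof.
  intros Hf s0 u0 Hs Hu eps He. destruct (Hf s0 u0 Hs Hu eps He) as [d [Hd H]]. exists d. split; auto.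
  intros. replace (- f s u - - f s0 u0) with (- (f s u - f s0 u0)) by ring. rewrite Rabs_Ropp. auto.
Qed.

Lemma c2_sub f g : c2 f -> c2 g -> c2 (fun s u => f s u - g s u).
Proof. intros. apply c2_add; auto. apply c2_opp; auto. Qed.

Lemma c2_lip_s (f : R -> R) Lc : 0 <= Lc -> (forall s s', in01 s -> in01 s' -> Rabs (f s - f s') <= Lc * Rabs (s - s')) ->
  c2 (fun s u => f s).
Proof.
  intros HL H s0 u0 Hs Hu eps He. exists (eps / (Lc + 1)). split; [apply Rdiv_lt_0_compat; lra|].
  intros s u Hs' Hu' Hss _. eapply Rle_lt_trans; [apply H; auto|].
  apply (Rle_lt_trans _ (Lc * (eps / (Lc + 1)))); [apply Rmult_le_compat_l; lra|]. apply lip_small; auto.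
Qed.

Lemma c2_lip_u (f : R -> R) Lc : 0 <= Lc -> (forall s s', in01 s -> in01 s' -> Rabs (f s - f s') <= Lc * Rabs (s - s')) ->
  c2 (fun s u => f u).
Proof.
  intros HL H s0 u0 Hs Hu eps He. exists (eps / (Lc + 1)). split; [apply Rdiv_lt_0_compat; lra|].
  intros s u Hs' Hu' _ Huu. eapply Rle_lt_trans; [apply H; auto|].
  apply (Rle_lt_trans _ (Lc * (eps / (Lc + 1)))); [apply Rmult_le_compat_l; lra|]. apply lip_small; auto.
Qed.

Lemma c2_path N g i : cont_path N g -> (i < N)%nat -> c2 (fun s u => g s i).
Proof.
  intros Hg Hi s0 u0 Hs Hu eps He. destruct (Hg s0 Hs eps He) as [d [Hd H]]. exists d. split; [auto|].
  intros s u Hs' _ Hss _. apply H; auto.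
Qed.

Lemma c2_esum k (f : nat -> R -> R -> R) : (forall l, (l < k)%nat -> c2 (f l)) -> c2 (fun s u => esum k (fun l => f l s u)).
Proof. induction k; intros H; simpl; [apply c2_const|]. apply c2_add; auto. Qed.

Lemma c2_square N H : (forall i, (i < N)%nat -> c2 (fun s u => H s u i)) -> cont_square N H.
Proof.
  intros Hc s0 u0 Hs Hu eps He.
  destruct (fin_min N (fun i d => forall s u, in01 s -> in01 u -> Rabs (s - s0) < d -> Rabs (u - u0) < d ->
                Rabs (H s u i - H s0 u0 i) < eps)) as [d [Hd Hall]].
  { intros i a b Ha [Hb Hba] s u H1 H2 H3 H4. apply Ha; auto; lra. }
  { intros i Hi. destruct (Hc i Hi s0 u0 Hs Hu eps He) as [d [Hd H']]. exists d. split; auto. }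
  exists d. split; [auto|]. intros s u Hs1 Hu1 Hss Huu i Hi. apply Hall; auto.
Qed.

Lemma c2_path_back N g : (forall i, (i < N)%nat -> c2 (fun s u => g s i)) -> cont_path N g.
Proof.
  intros Hc s0 Hs eps He.
  destruct (c2_square N (fun s u => g s) Hc s0 0 Hs ltac:(unfold in01; lra) eps He) as [d [Hd H]].
  exists d. split; auto. intros s Hs' Hss i Hi. apply (H s 0); auto; unfold in01 in *; try lra.
  unfold Rminus; rewrite Rplus_opp_r, Rabs_R0; lra.
Qed.

Definition hat (M l : nat) (s : R) : R := Rmax 0 (1 - Rabs (s * INR M - INR l)).
Definition pl (M : nat) (V : nat -> nat -> R) (s : R) (i : nat) : R := esum (S M) (fun l => hat M l s * V l i).

Lemma Rmax0_lip a b : Rabs (Rmax 0 a - Rmax 0 b) <= Rabs (a - b).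
Proof. unfold Rmax. repeat destruct (Rle_dec _ _); apply Rabs_le; split;
  try (pose proof (Rle_abs (a - b)); pose proof (Rle_abs (- (a - b))); rewrite Rabs_Ropp in *; lra). Qed.

Lemma hat_lip M l s s' : Rabs (hat M l s - hat M l s') <= INR M * Rabs (s - s').
Proof.
  unfold hat. eapply Rle_trans; [apply Rmax0_lip|].
  replace (1 - Rabs (s * INR M - INR l) - (1 - Rabs (s' * INR M - INR l))) with
    (Rabs (s' * INR M - INR l) - Rabs (s * INR M - INR l)) by ring.
  eapply Rle_trans; [apply Rabs_triang_inv2|].
  replace (s' * INR M - INR l - (s * INR M - INR l)) with ((s' - s) * INR M) by ring.
  rewrite Rabs_mult, (Rabs_pos_eq (INR M)) by apply pos_INR. rewrite <- Rabs_Ropp.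
  replace (- (s' - s)) with (s - s') by ring. lra.
Qed.

Lemma c2_pl M V i : c2 (fun s u => pl M V s i).
Proof.
  unfold pl. apply (c2_esum (S M) (fun l s u => hat M l s * V l i)). intros l _.
  apply c2_mul; [|apply c2_const].
  apply (c2_lip_s _ (INR M)); [apply pos_INR|]. intros; apply hat_lip.
Qed.

Lemma esum_two n f k : (S k < n)%nat -> (forall l, (l < n)%nat -> l <> k -> l <> S k -> f l = 0) ->
  esum n f = f k + f (S k).
Proof.
  induction n; intros Hk H; [lia|]. simpl.
  destruct (Nat.eq_dec n (S k)) as [->|Hne].
  - rewrite (esum_single (S k) f k) by (auto; intros; apply H; lia). lra.
  - rewrite IHn by (auto; lia). rewrite (H n) by lia. lra.
Qed.

Lemma hat_zero M l k s : l <> k -> l <> S k -> INR k <= s * INR M <= INR k + 1 -> hat M l s = 0.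
Proof.
  intros H1 H2 Hs. unfold hat. apply Rmax_left.
  destruct (Nat.lt_trichotomy l k) as [Hlt|[Heq|Hgt]]; [|lia|].
  - assert (INR (S l) <= INR k) by (apply le_INR; lia). rewrite S_INR in *.
    rewrite Rabs_pos_eq by lra. lra.
  - assert (INR (S (S k)) <= INR l) by (apply le_INR; lia). rewrite !S_INR in *.
    rewrite Rabs_left1 by lra. lra.
Qed.

Lemma pl_seg M V k s i : (k < M)%nat -> INR k <= s * INR M <= INR k + 1 ->
  pl M V s i = (1 - (s * INR M - INR k)) * V k i + (s * INR M - INR k) * V (S k) i.
Proof.
  intros Hk Hs. unfold pl. rewrite (esum_two (S M) _ k).
  2: lia.
  2: { intros l Hl H1 H2. rewrite (hat_zero M l k s) by auto. ring. }
  unfold hat. rewrite S_INR.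
  rewrite (Rabs_pos_eq (s * INR M - INR k)) by lra.
  rewrite (Rabs_left1 (s * INR M - (INR k + 1))) by lra.
  rewrite !Rmax_right by lra. ring.
Qed.

Lemma seg_exists M s : (1 <= M)%nat -> in01 s -> exists k, (k < M)%nat /\ INR k <= s * INR M <= INR k + 1.
Proof.
  intros HM Hs. apply cell_exists; auto. unfold in01 in Hs. pose proof (pos_INR M). split; nra.
Qed.

Lemma path_cont_pt N g i c : cont_path N g -> (i < N)%nat -> continuity_pt (fun s => g (clamp 0 1 s) i) c.
Proof.
  intros Hg Hi. apply cont_pt_eps. intros eps He.
  assert (Hc : in01 (clamp 0 1 c)) by (apply clamp_in; lra).
  destruct (Hg _ Hc eps He) as [d [Hd H]]. exists d. split; auto.
  intros x Hx. apply H; auto. apply clamp_in; lra. eapply Rle_lt_trans; [apply clamp_lip; lra|auto].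
Qed.

Lemma path_bound N g : cont_path N g -> exists R0, 0 <= R0 /\ forall s, in01 s -> bnd N R0 (g s).
Proof.
  intros Hg.
  destruct (fin_max N (fun i a => 0 <= a /\ forall s, in01 s -> Rabs (g s i) <= a)) as [R0 HR].
  { intros i a b [Ha H] Hab. split; [lra|]. intros s Hs. specialize (H s Hs). lra. }
  { intros i Hi. destruct (continuity_ab_min (fun s => - Rabs (g (clamp 0 1 s) i)) 0 1) as [x [Hx1 Hx2]]; [lra| |].
    - intros c _. apply cont_pt_eps. intros eps He.
      pose proof (path_cont_pt N g i c Hg Hi eps He) as Hc. destruct Hc as [d [Hd H]]. exists d. split; auto.
      intros x Hx. destruct (Req_dec x c) as [->|Hne].
      + unfold Rminus; rewrite Rplus_opp_r, Rabs_R0; lra.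
      + specialize (H x (conj (conj I (not_eq_sym Hne)) Hx)). simpl in H. unfold R_dist in H.
        replace (- Rabs (g (clamp 0 1 x) i) - - Rabs (g (clamp 0 1 c) i)) with (- (Rabs (g (clamp 0 1 x) i) - Rabs (g (clamp 0 1 c) i))) by ring.
        rewrite Rabs_Ropp. eapply Rle_lt_trans; [apply Rabs_triang_inv2|auto].
    - exists (Rabs (g (clamp 0 1 x) i)). split; [apply Rabs_pos|]. intros s Hs.
      specialize (Hx1 s Hs). rewrite (clamp_id 0 1 s) in Hx1 by auto. lra. }
  exists (Rmax 0 R0). split; [apply Rmax_l|]. intros s Hs i Hi.
  destruct (HR i Hi) as [_ H]. eapply Rle_trans; [apply H; auto|apply Rmax_r].
Qed.

Lemma path_unif N g : cont_path N g -> forall eps, 0 < eps -> exists delta, 0 < delta /\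
  forall s s', in01 s -> in01 s' -> Rabs (s - s') <= delta -> forall i, (i < N)%nat -> Rabs (g s i - g s' i) <= eps.
Proof.
  intros Hg eps He.
  destruct (fin_min N (fun i d => forall s s', in01 s -> in01 s' -> Rabs (s - s') <= d -> Rabs (g s i - g s' i) <= eps))
    as [d [Hd H]].
  { intros i a b Ha [Hb Hba] s s' H1 H2 H3. apply Ha; auto; lra. }
  { intros i Hi. destruct (Heine (fun s => g (clamp 0 1 s) i) (fun c => 0 <= c <= 1) (compact_P3 0 1)) with (eps := mkposreal eps He) as [dd Hdd].
    - intros x _. apply (path_cont_pt N); auto.
    - exists (dd / 2). split; [destruct dd; simpl; lra|]. intros s s' Hs Hs' Hss.
      specialize (Hdd s s' Hs Hs'). rewrite !clamp_id in Hdd by auto. left. apply Hdd.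
      destruct dd; simpl in *; lra. }
  exists d. split; [auto|]. intros s s' Hs Hs' Hss i Hi. apply H; auto.
Qed.

Lemma Q_of_bnd K d m n R1 y : (1 <= m)%nat -> (1 <= n)%nat -> bnd (dK K * d * m) R1 y ->
  (forall t, Rabs t <= R1 + 1 -> ~ Z K d m n y t) -> Qspace K d m n y.
Proof.
  intros Hm Hn Hb H. apply Q_iff. intros t. destruct (Rle_dec (Rabs t) (R1 + 1)) as [Ht|Ht]; auto.
  apply (rootbound K d m n y t R1); auto. lra.
Qed.

Lemma noZ_of_Q K d m n y t : Qspace K d m n y -> ~ Z K d m n y t.
Proof. intros HQ. exact (proj1 (Q_iff K d m n y) HQ t). Qed.

Lemma nonempty_Q K d m n : (1 <= m)%nat -> (1 <= n)%nat -> (n <= d)%nat -> (4 <= dK K * m * n)%nat ->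
  exists x, Qspace K d m n x.
Proof.
  intros Hm Hn Hnd H4.
  destruct (core K d m n 1 (fun _ _ _ => 0) (fun _ _ => 1) (fun _ p => 5 * (2 * p 2%nat - 1)) 1 1) as [w [Hw Hc]];
    auto; try lra.
  - intros. apply BL_const.
  - intros. apply BL_const.
  - intros; lra.
  - intros. repeat first [apply BL_add | apply BL_mul | apply BL_sub | apply BL_const | apply BL_box3; lia].
  - exists (Ew K d n w). apply (Q_of_bnd K d m n 4); auto.
    + intros i Hi. replace 4 with (4 * 1) by ring. apply Ew_bound. auto.
    + intros t Ht HZ. apply Rabs_le_inv in Ht.
      apply (Hc 0%nat (mk3 0 0 ((t / 5 + 1) / 2))); auto.
      * apply box3_mk; try lra.
      * simpl. replace (5 * (2 * ((t / 5 + 1) / 2) - 1)) with t by field.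
        revert HZ. apply Z_ext. intros; ring.
Qed.

Lemma bnd2 N (x y : nat -> R) : exists R0, 0 <= R0 /\ bnd N R0 x /\ bnd N R0 y.
Proof.
  destruct (fin_max N (fun i a => Rabs (x i) <= a /\ Rabs (y i) <= a)) as [R0 H].
  { intros i a b [] Hab; split; lra. }
  { intros i _. exists (Rmax (Rabs (x i)) (Rabs (y i))). split; [apply Rmax_l|apply Rmax_r]. }
  exists (Rmax 0 R0). split; [apply Rmax_l|]. split; intros i Hi; destruct (H i Hi);
  eapply Rle_trans; eauto; apply Rmax_r.
Qed.

Lemma pathconn_Q K d m n : (1 <= m)%nat -> (1 <= n)%nat -> (n <= d)%nat -> (4 <= dK K * m * n)%nat ->
  forall x y, Qspace K d m n x -> Qspace K d m n y ->
  exists g, path_in (dK K * d * m) (Qspace K d m n) g /\ eqN (dK K * d * m) (g 0) x /\ eqN (dK K * d * m) (g 1) y.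
Proof.
  intros Hm Hn Hnd H4 x y Hx Hy.
  set (N := (dK K * d * m)%nat).
  destruct (bnd2 N x y) as [R0 [HR0 [Hbx Hby]]].
  set (X := fun l : nat => if Nat.eqb l 0 then x else y).
  destruct (tri K d m n 2 X X x R0 1) as [w [Hw Htri]]; auto; try lra.
  { intros l Hl. unfold X. destruct (Nat.eqb l 0); auto. }
  { intros l a Hl Ha t HZ. apply (noZ_of_Q K d m n (X l) t); [unfold X; destruct (Nat.eqb l 0); auto|].
    revert HZ. apply Z_ext. intros; ring. }
  set (v := fun i => x i + Ew K d n w i).
  set (VV := fun l : nat => match l with 0%nat => x | 1%nat => v | _ => y end).
  exists (pl 2 VV). split; [split|split].
  - apply c2_path_back. intros i _. apply c2_pl.
  - intros s Hs. destruct (seg_exists 2 s ltac:(lia) Hs) as [k [Hk Hks]].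
    apply Q_iff. intros t HZ. rewrite (functional_extensionality _ _ (fun i => pl_seg 2 VV k s i Hk Hks)) in HZ.
    set (lam := s * INR 2 - INR k) in HZ.
    assert (Hlam : 0 <= lam <= 1) by (unfold lam; lra). clearbody lam.
    destruct k as [|[|]]; [| |lia].
    + refine (Htri 0%nat 0 lam _ _ _ _ t _); [lia|lra|lra|lra|].
      revert HZ. apply Z_ext. intros i _. unfold VV, v, X. simpl. ring.
    + refine (Htri 1%nat 0 (1 - lam) _ _ _ _ t _); [lia|lra|lra|lra|].
      revert HZ. apply Z_ext. intros i _. unfold VV, v, X. simpl. ring.
  - intros i _. rewrite (pl_seg 2 VV 0 0 i) by (simpl; try lia; lra). simpl. ring.
  - intros i _. rewrite (pl_seg 2 VV 1 1 i) by (simpl; try lia; lra). simpl. ring.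
Qed.

Definition tri_ok K d m n (x0 vp v : nat -> R) : Prop :=
  forall a b, 0 <= a -> 0 <= b -> a + b <= 1 -> forall t,
    ~ Z K d m n (fun i => x0 i + a * (vp i - x0 i) + b * (v i - x0 i)) t.

Definition nextv K d m n (x0 gk : nat -> R) (eta : R) (vp : nat -> R) : nat -> R :=
  epsilon (inhabits x0) (fun v => (exists w, (forall e, (e < 4)%nat -> 0 <= w e <= eta) /\
      forall i, v i = gk i + Ew K d n w i) /\ tri_ok K d m n x0 vp v).

Fixpoint vert K d m n (x0 : nat -> R) (gs : nat -> nat -> R) (eta : R) (k : nat) : nat -> R :=
  match k with 0%nat => x0 | S k' => nextv K d m n x0 (gs (S k')) eta (vert K d m n x0 gs eta k') end.

Lemma bnd_mono N R0 R1 y : R0 <= R1 -> bnd N R0 y -> bnd N R1 y.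
Proof. intros H Hy i Hi. specialize (Hy i Hi). lra. Qed.

Lemma loop_Q K d m n : (1 <= m)%nat -> (1 <= n)%nat -> (n <= d)%nat -> (4 <= dK K * m * n)%nat ->
  forall g, path_in (dK K * d * m) (Qspace K d m n) g -> eqN (dK K * d * m) (g 0) (g 1) ->
     exists H : R -> R -> nat -> R,
       cont_square (dK K * d * m) H /\
       (forall s u, in01 s -> in01 u -> Qspace K d m n (H s u)) /\
       (forall s, in01 s -> eqN (dK K * d * m) (H s 0) (g s) /\ eqN (dK K * d * m) (H s 1) (g 0)) /\
       (forall u, in01 u -> eqN (dK K * d * m) (H 0 u) (g 0) /\ eqN (dK K * d * m) (H 1 u) (g 0)).
Proof.
  intros Hm Hn Hnd H4 g [Hc HQ] Hloop.
  set (N := (dK K * d * m)%nat). fold N in Hc, Hloop |- *.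
  set (x0 := g 0).
  destruct (path_bound N g Hc) as [R0 [HR0 Hb]].
  set (R1 := R0 + 4).
  destruct (margin_path K d m n R1 g) as [r0 [Hr0 Hmarg]]; auto.
  { unfold R1; lra. }
  { intros s Hs. apply (bnd_mono N R0); [unfold R1; lra|auto]. }
  { intros s Hs t. apply noZ_of_Q; auto. }
  destruct (Nphi_lip K d m n R1 (R1 + 1)) as [Lp [HLp Hlip]]. fold N in Hlip.
  set (eps := r0 / (10 * (Lp + 1))).
  assert (Heps : 0 < eps) by (unfold eps; apply Rdiv_lt_0_compat; lra).
  destruct (path_unif N g Hc eps Heps) as [delta [Hdelta Hunif]].
  destruct (nat_above (1 / delta)) as [M0 HM0].
  set (M := S M0).
  assert (HMr : 0 < INR M) by (apply lt_0_INR; unfold M; lia).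
  assert (HMd : 1 / INR M <= delta).
  { assert (INR M0 < INR M) by (apply lt_INR; unfold M; lia).
    assert (H1 : 1 / delta < INR M) by lra.
    assert (H2 : 1 < delta * INR M).
    { apply (Rmult_lt_compat_l delta) in H1; auto. replace (delta * (1 / delta)) with 1 in H1 by (field; lra). lra. }
    unfold Rdiv; rewrite Rmult_1_l. apply (Rmult_le_reg_r (INR M)); [lra|]. rewrite Rinv_l by lra. lra. }
  set (eta := Rmin 1 eps).
  assert (Heta : 0 < eta <= 1) by (unfold eta; split; [apply Rmin_glb_lt; lra|apply Rmin_l]).
  assert (Heta2 : eta <= eps) by apply Rmin_r.
  set (sk := fun k : nat => INR k / INR M).
  assert (Hsk : forall k, (k <= M)%nat -> in01 (sk k)).
  { intros k Hk. unfold sk, in01. assert (INR k <= INR M) by (apply le_INR; auto).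
    pose proof (pos_INR k). split; [unfold Rdiv; apply Rmult_le_pos; [lra|left; apply Rinv_0_lt_compat; lra]|].
    apply (Rmult_le_reg_r (INR M)); auto. unfold Rdiv. rewrite Rmult_assoc, Rinv_l by lra. lra. }
  set (gs := fun k => g (sk k)).
  set (vt := vert K d m n x0 gs eta).
  set (Inv := fun k => bnd N (R0 + 4) (vt k) /\ (forall i, (i < N)%nat -> Rabs (vt k i - gs k i) <= 4 * eta) /\
                 forall a, 0 <= a <= 1 -> forall t, ~ Z K d m n (fun i => x0 i + a * (vt k i - x0 i)) t).
  assert (Hx0 : Qspace K d m n x0) by (apply HQ; unfold in01; lra).
  assert (Hbx0 : bnd N R0 x0) by (apply Hb; unfold in01; lra).
  assert (Hstep : forall k, (S k < M)%nat -> Inv k ->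
     (exists w, (forall e, (e < 4)%nat -> 0 <= w e <= eta) /\ forall i, vt (S k) i = gs (S k) i + Ew K d n w i) /\
     tri_ok K d m n x0 (vt k) (vt (S k))).
  { intros k Hk [Hb1 [Hc1 He1]].
    change (vt (S k)) with (nextv K d m n x0 (gs (S k)) eta (vt k)).
    unfold nextv. apply epsilon_spec.
    destruct (tri K d m n 1 (fun _ => x0) (fun _ => vt k) (gs (S k)) (R0 + 4) eta) as [w [Hw Ht]]; auto; try lra.
    - intros l _. split; auto. apply (bnd_mono N R0); [lra|auto].
    - apply (bnd_mono N R0); [lra|]. apply Hb. apply Hsk. lia.
    - exists (fun i => gs (S k) i + Ew K d n w i). split; [exists w; split; auto|].
      intros a b Ha Hb' Hab t HZ. apply (Ht 0%nat a b ltac:(lia) Ha Hb' Hab t). revert HZ. apply Z_ext. intros; ring. }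
  assert (HInv : forall k, (k < M)%nat -> Inv k).
  { induction k; intros Hk.
    - assert (Es0 : sk 0%nat = 0) by (unfold sk; simpl; unfold Rdiv; apply Rmult_0_l).
      assert (E0 : gs 0%nat = x0) by (unfold gs; rewrite Es0; reflexivity).
      unfold Inv. change (vt 0%nat) with x0.
      split; [|split].
      + apply (bnd_mono N R0); [lra|auto].
      + intros i Hi. rewrite E0. unfold Rminus; rewrite Rplus_opp_r, Rabs_R0; lra.
      + intros a Ha t HZ. apply (noZ_of_Q K d m n x0 t Hx0). revert HZ. apply Z_ext. intros; ring.
    - destruct (Hstep k Hk (IHk ltac:(lia))) as [[w [Hw Hv]] Ht].
      split; [|split].
      + intros i Hi. rewrite Hv. pose proof (Ew_bound K d n w i eta Hw).
        assert (Rabs (gs (S k) i) <= R0) by (apply Hb; [apply Hsk; lia|auto]).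
        eapply Rle_trans; [apply Rabs_triang|]. lra.
      + intros i Hi. rewrite Hv. replace (gs (S k) i + Ew K d n w i - gs (S k) i) with (Ew K d n w i) by ring.
        apply Ew_bound; auto.
      + intros a Ha t HZ. apply (Ht 0 a ltac:(lra) ltac:(lra) ltac:(lra) t). revert HZ. apply Z_ext. intros; ring. }
  set (V := fun l => if Nat.ltb l M then vt l else x0).
  assert (HVM : V M = x0) by (unfold V; rewrite Nat.ltb_irrefl; auto).
  assert (HVl : forall l, (l < M)%nat -> V l = vt l) by (intros l Hl; unfold V; apply Nat.ltb_lt in Hl; rewrite Hl; auto).
  assert (HVb : forall l, (l <= M)%nat -> bnd N (R0 + 4) (V l)).
  { intros l Hl. destruct (Nat.eq_dec l M) as [->|Hne]; [rewrite HVM; apply (bnd_mono N R0); [lra|auto]|].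
    rewrite HVl by lia. apply HInv; lia. }
  assert (HVc : forall l i, (l <= M)%nat -> (i < N)%nat -> Rabs (V l i - gs l i) <= 4 * eta).
  { intros l i Hl Hi. destruct (Nat.eq_dec l M) as [->|Hne].
    - rewrite HVM. assert (E1 : gs M = g 1) by (unfold gs, sk; f_equal; field; lra).
      rewrite E1. unfold x0. rewrite (Hloop i Hi). unfold Rminus; rewrite Rplus_opp_r, Rabs_R0; lra.
    - rewrite HVl by lia. apply HInv; lia. }
  assert (HVt : forall k, (k < M)%nat -> tri_ok K d m n x0 (V k) (V (S k))).
  { intros k Hk. destruct (Nat.eq_dec (S k) M) as [Hkm|Hkm].
    - rewrite Hkm, HVM, HVl by lia. intros a b Ha Hb' Hab t HZ.
      destruct (HInv k Hk) as [_ [_ He]]. apply (He a ltac:(lra) t). revert HZ. apply Z_ext. intros; ring.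
    - rewrite !HVl by lia. apply Hstep; [lia|]. apply HInv; lia. }
  set (aa := fun u => 1 - Rmax 0 (1 - 2 * u)).
  set (bb := fun u => Rmax 0 (2 * u - 1)).
  exists (fun s u i => x0 i + (1 - bb u) * ((1 - aa u) * g s i + aa u * pl M V s i - x0 i)).
  split; [|split; [|split]].
  -
    apply c2_square. intros i Hi.
    assert (Haa : c2 (fun s u => aa u)).
    { apply (c2_lip_u aa 2); [lra|]. intros u u' _ _. unfold aa.
      replace (1 - Rmax 0 (1 - 2 * u) - (1 - Rmax 0 (1 - 2 * u'))) with (- (Rmax 0 (1 - 2 * u) - Rmax 0 (1 - 2 * u'))) by ring.
      rewrite Rabs_Ropp. eapply Rle_trans; [apply Rmax0_lip|].
      replace (1 - 2 * u - (1 - 2 * u')) with (-2 * (u - u')) by ring. rewrite Rabs_mult.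
      replace (Rabs (-2)) with 2 by (rewrite Rabs_left; lra). lra. }
    assert (Hbb : c2 (fun s u => bb u)).
    { apply (c2_lip_u bb 2); [lra|]. intros u u' _ _. unfold bb. eapply Rle_trans; [apply Rmax0_lip|].
      replace (2 * u - 1 - (2 * u' - 1)) with (2 * (u - u')) by ring. rewrite Rabs_mult.
      replace (Rabs 2) with 2 by (rewrite Rabs_pos_eq; lra). lra. }
    apply c2_add; [apply c2_const|]. apply c2_mul; [apply c2_sub; [apply c2_const|auto]|].
    apply c2_sub; [|apply c2_const]. apply c2_add.
    + apply c2_mul; [apply c2_sub; [apply c2_const|auto]|]. apply (c2_path N); auto.
    + apply c2_mul; auto. apply c2_pl.
  -
    intros s u Hs Hu.
    destruct (seg_exists M s ltac:(unfold M; lia) Hs) as [k [Hk Hks]].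
    assert (Hpl : forall i, pl M V s i = (1 - (s * INR M - INR k)) * V k i + (s * INR M - INR k) * V (S k) i)
      by (intros; apply pl_seg; auto).
    set (lam := s * INR M - INR k) in Hpl.
    assert (Hlam : 0 <= lam <= 1) by (unfold lam; lra).
    destruct (Rle_dec u (1/2)) as [Hu2|Hu2].
    + assert (Hbb0 : bb u = 0) by (unfold bb; apply Rmax_left; lra).
      assert (Haa0 : aa u = 2 * u) by (unfold aa; rewrite Rmax_right by lra; ring).
      rewrite Hbb0, Haa0. unfold in01 in Hu.
      set (a := 2 * u). assert (Ha : 0 <= a <= 1) by (unfold a; lra).
      set (P := fun i => x0 i + (1 - 0) * ((1 - a) * g s i + a * pl M V s i - x0 i)).
      assert (HP : forall i, P i = (1 - a) * g s i + a * pl M V s i) by (intros; unfold P; ring).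
      assert (Hsk1 : Rabs (s - sk k) <= 1 / INR M).
      { unfold sk. apply Rabs_le. split; apply (Rmult_le_reg_r (INR M)); auto; unfold Rdiv;
        rewrite ?Rmult_minus_distr_r, ?Ropp_mult_distr_l_reverse, !Rmult_assoc, Rinv_l by lra; lra. }
      assert (Hsk2 : Rabs (s - sk (S k)) <= 1 / INR M).
      { unfold sk. rewrite S_INR. apply Rabs_le. split; apply (Rmult_le_reg_r (INR M)); auto; unfold Rdiv;
        rewrite ?Rmult_minus_distr_r, ?Ropp_mult_distr_l_reverse, !Rmult_assoc, Rinv_l by lra; lra. }
      assert (Hclose : forall l i, (l = k \/ l = S k) -> (i < N)%nat -> Rabs (V l i - g s i) <= 5 * eps).
      { intros l i Hl Hi.
        assert (Hl' : (l <= M)%nat) by (destruct Hl; lia).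
        assert (Rabs (s - sk l) <= delta) by (destruct Hl; subst; lra).
        pose proof (HVc l i Hl' Hi).
        assert (Rabs (gs l i - g s i) <= eps).
        { unfold gs. apply Hunif; auto. rewrite <- Rabs_Ropp. replace (- (sk l - s)) with (s - sk l) by ring. auto. }
        replace (V l i - g s i) with ((V l i - gs l i) + (gs l i - g s i)) by ring.
        eapply Rle_trans; [apply Rabs_triang|]. lra. }
      assert (HPg : distn N P (g s) <= 5 * eps).
      { apply distn_le; [lra|]. intros i Hi. rewrite HP, Hpl.
        replace ((1 - a) * g s i + a * ((1 - lam) * V k i + lam * V (S k) i) - g s i) with
          (a * ((1 - lam) * (V k i - g s i) + lam * (V (S k) i - g s i))) by ring.
        rewrite Rabs_mult, (Rabs_pos_eq a) by lra.
        pose proof (Hclose k i (or_introl eq_refl) Hi). pose proof (Hclose (S k) i (or_intror eq_refl) Hi).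
        assert (Rabs ((1 - lam) * (V k i - g s i) + lam * (V (S k) i - g s i)) <= 5 * eps).
        { eapply Rle_trans; [apply Rabs_triang|]. rewrite !Rabs_mult, (Rabs_pos_eq (1 - lam)), (Rabs_pos_eq lam) by lra.
          assert ((1 - lam) * Rabs (V k i - g s i) <= (1 - lam) * (5 * eps)) by (apply Rmult_le_compat_l; lra).
          assert (lam * Rabs (V (S k) i - g s i) <= lam * (5 * eps)) by (apply Rmult_le_compat_l; lra). lra. }
        assert (a * Rabs ((1 - lam) * (V k i - g s i) + lam * (V (S k) i - g s i)) <= 1 * (5 * eps)).
        { apply Rmult_le_compat; try lra; apply Rabs_pos. }
        lra. }
      assert (HPb : bnd N R1 P).
      { intros i Hi. rewrite HP, Hpl. pose proof (HVb k ltac:(lia) i Hi). pose proof (HVb (S k) ltac:(lia) i Hi).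
        pose proof (Hb s Hs i Hi).
        assert (Rabs ((1 - lam) * V k i + lam * V (S k) i) <= R0 + 4).
        { eapply Rle_trans; [apply Rabs_triang|]. rewrite !Rabs_mult, (Rabs_pos_eq (1 - lam)), (Rabs_pos_eq lam) by lra.
          assert ((1 - lam) * Rabs (V k i) <= (1 - lam) * (R0 + 4)) by (apply Rmult_le_compat_l; lra).
          assert (lam * Rabs (V (S k) i) <= lam * (R0 + 4)) by (apply Rmult_le_compat_l; lra). lra. }
        eapply Rle_trans; [apply Rabs_triang|]. rewrite !Rabs_mult, (Rabs_pos_eq (1 - a)), (Rabs_pos_eq a) by lra.
        assert ((1 - a) * Rabs (g s i) <= (1 - a) * R0) by (apply Rmult_le_compat_l; lra).
        assert (a * Rabs ((1 - lam) * V k i + lam * V (S k) i) <= a * (R0 + 4)) by (apply Rmult_le_compat_l; lra).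
        unfold R1. nra. }
      apply (Q_of_bnd K d m n R1 P); auto. intros t Ht.
      apply Nphi_noZ.
      assert (Hgb : bnd N R1 (g s)) by (apply (bnd_mono N R0); [unfold R1; lra|auto]).
      specialize (Hlip P (g s) t t HPb Hgb Ht Ht). unfold Rminus in Hlip at 2.
      rewrite Rplus_opp_r, Rabs_R0, Rmax_right in Hlip by apply distn_nonneg.
      apply Rabs_le_inv in Hlip. specialize (Hmarg s Hs t Ht).
      assert (Lp * distn N P (g s) <= Lp * (5 * eps)) by (apply Rmult_le_compat_l; auto).
      assert (Lp * (5 * eps) < r0).
      { unfold eps. replace (Lp * (5 * (r0 / (10 * (Lp + 1))))) with ((Lp / (Lp + 1)) * (r0 / 2)) by (field; lra).
        assert (Lp / (Lp + 1) < 1).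
        { apply (Rmult_lt_reg_r (Lp + 1)); [lra|]. unfold Rdiv. rewrite Rmult_assoc, Rinv_l by lra. lra. }
        assert (0 <= Lp / (Lp + 1)) by (unfold Rdiv; apply Rmult_le_pos; [lra|left; apply Rinv_0_lt_compat; lra]).
        nra. }
      lra.
    + assert (Haa1 : aa u = 1) by (unfold aa; rewrite Rmax_left by lra; ring).
      set (b := bb u). assert (Hb01 : 0 <= b <= 1).
      { unfold b, bb. unfold in01 in Hu. split; [apply Rmax_l|]. apply Rmax_lub; lra. }
      rewrite Haa1. fold b. apply Q_iff. intros t HZ.
      apply (HVt k Hk ((1 - b) * (1 - lam)) ((1 - b) * lam) ltac:(nra) ltac:(nra) ltac:(nra) t).
      revert HZ. apply Z_ext. intros i _. rewrite Hpl. ring.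
  - intros s Hs. split.
    + intros i Hi. assert (bb 0 = 0) by (unfold bb; apply Rmax_left; lra).
      assert (aa 0 = 0) by (unfold aa; rewrite Rmax_right by lra; ring).
      rewrite H, H0. ring.
    + intros i Hi. assert (bb 1 = 1) by (unfold bb; rewrite Rmax_right by lra; ring). rewrite H. unfold x0. ring.
  - intros u Hu. split.
    + intros i Hi. rewrite (pl_seg M V 0 0 i) by (try (unfold M; lia); simpl; lra).
      rewrite HVl by (unfold M; lia). change (vt 0%nat) with x0. simpl. unfold x0. ring.
    + intros i Hi. assert (HM1 : (M - 1 < M)%nat) by (unfold M; lia).
      rewrite (pl_seg M V (M - 1) 1 i HM1).
      2: { rewrite minus_INR by (unfold M; lia). simpl. lra. }
      replace (S (M - 1)) with M by (unfold M; lia). rewrite HVM.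
      rewrite minus_INR by (unfold M; lia). simpl.
      rewrite <- (Hloop i Hi). unfold x0. ring.
Qed.

Lemma simply_conn_gen K d m n : (1 <= m)%nat -> (1 <= n)%nat -> (n <= d)%nat -> (4 <= dK K * m * n)%nat ->
  simply_connected (dK K * d * m) (Qspace K d m n).
Proof.
  intros Hm Hn Hnd H4. split; [apply nonempty_Q; auto|split].
  - apply pathconn_Q; auto.
  - apply loop_Q; auto.
Qed.

Lemma simply_conn_big K d m n : (1 <= m)%nat -> (d < n)%nat ->
  simply_connected (dK K * d * m) (Qspace K d m n).
Proof.
  intros Hm Hdn.
  assert (HQ : forall y, Qspace K d m n y) by (intros y; apply Q_iff; intros t; apply big_n_noZ; auto).
  set (N := (dK K * d * m)%nat).
  split; [exists (fun _ => 0); auto|split].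
  - intros x y _ _. destruct (bnd2 N x y) as [R0 [HR0 [Hbx Hby]]].
    exists (fun s i => x i + s * (y i - x i)). split; [split|split].
    + apply (cont_path_lin _ _ _ (2 * R0)). intros i Hi. specialize (Hbx i Hi); specialize (Hby i Hi).
      unfold Rminus. eapply Rle_trans; [apply Rabs_triang|]. rewrite Rabs_Ropp. lra.
    + intros; auto.
    + intros i _. ring.
    + intros i _. ring.
  - intros g [Hc _] Hloop. exists (fun s u i => (1 - u) * g s i + u * g 0 i). split; [|split; [|split]].
    + apply c2_square. intros i Hi. apply c2_add; apply c2_mul.
      * apply (c2_lip_u (fun u => 1 - u) 1); [lra|]. intros. replace (1 - s - (1 - s')) with (- (s - s')) by ring.
        rewrite Rabs_Ropp; lra.
      * apply (c2_path N); auto.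
      * apply (c2_lip_u (fun u => u) 1); [lra|]. intros. lra.
      * apply c2_const.
    + intros; auto.
    + intros s _. split; intros i _; ring.
    + intros u _. split; intros i Hi; [ring|]. rewrite <- (Hloop i Hi). ring.
Qed.

Theorem lemma6p1 (K : Kfield) (d m n : nat) :
  (1 <= d)%nat -> (1 <= m)%nat -> (1 <= n)%nat -> ~ (m = 1%nat /\ n = 1%nat) ->
  (4 <= dK K * m * n)%nat ->
  simply_connected (dK K * d * m) (Qspace K d m n).
Proof.
  intros Hd Hm Hn _ H4. destruct (le_lt_dec n d) as [Hnd|Hdn].
  - apply simply_conn_gen; auto.
  - apply simply_conn_big; auto.
Qed.
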